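(* Let $\mathcal M=(\mathcal L+\mathrm{diag}(p_1,\dots,p_n))\otimes I_m$ and suppose Assumptions A1 and A2 hold. Consider the estimator $\dot a_i=-\beta\,\mathrm{sgn}\big(\sum_{j\in\mathcal N_i}w_{ij}(a_i-a_j)+p_i(a_i-a_0)\big)$, $i=1,\dots,n$, with arbitrary initial values $a_i(t_0)\in\mathbb R^m$. Let $\bar a=\mathrm{col}(a_1-a_0,\dots,a_n-a_0)$ and $V_0=\frac12\bar a^T\mathcal M\bar a$. Then $a_i(t)=a_0(t)$ for all $i$ and all $t\ge T_f$, where $$T_f=t_0+\frac{\sqrt{2\lambda_{\max}(\mathcal M)V_0(t_0)}}{\lambda_{\min}(\mathcal M)\big(\beta-\sup_{t\ge t_0}\|\dot a_0(t)\|\big)}.$$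
   Context: Undirected graph on $\{1,\dots,n\}$ with symmetric weights $w_{ij}\ge0$, $w_{ii}=0$, neighbour sets $\mathcal N_i$; pinning weights $p_i\ge0$; Laplacian $\mathcal L$ with $l_{ii}=\sum_jw_{ij}$, $l_{ij}=-w_{ij}$. $a_0:[t_0,\infty)\to\mathbb R^m$ is continuously differentiable (leader acceleration). $\mathrm{sgn}(z)$ is the componentwise sign. Assumption A1: the leader has a directed path to every node (then $\mathcal M$ is symmetric positive definite). Assumption A2: $\sup_{t\ge t_0}\|\dot a_0(t)\|<\beta$, $\beta>0$. $\lambda_{\min},\lambda_{\max}$ denote extreme eigenvalues. *)

(* Defs.v *)
From Stdlib Require Import Reals Lra.
Open Scope R_scope.

Fixpoint rsum (n : nat) (f : nat -> R) : R :=
  match n with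
  | O => 0
  | S n' => rsum n' f + f n'
  end.

(* Vectors in R^m are functions nat -> R (only indices k < m matter).
   Euclidean norm. *)
Definition norm2 (m : nat) (v : nat -> R) : R :=
  sqrt (rsum m (fun k => v k * v k)).

(* Weighted graph on nodes 0..n-1 (paper's 1..n), weights w, pinning p. *)
Definition graph_ok (n : nat) (w : nat -> nat -> R) (p : nat -> R) : Prop :=
  (forall i j, (i < n)%nat -> (j < n)%nat -> w i j = w j i) /\
  (forall i j, (i < n)%nat -> (j < n)%nat -> 0 <= w i j) /\
  (forall i, (i < n)%nat -> w i i = 0) /\
  (forall i, (i < n)%nat -> 0 <= p i).

(* Nodes reachable from the leader by a directed path:
   the leader is linked to i iff p i > 0; i is linked to j iff w i j > 0. *)
Inductive leader_reach (n : nat) (w : nat -> nat -> R) (p : nat -> R) : nat -> Prop :=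
  | lr_pin : forall i, (i < n)%nat -> 0 < p i -> leader_reach n w p i
  | lr_step : forall i j, leader_reach n w p i -> (j < n)%nat -> 0 < w i j ->
      leader_reach n w p j.

Definition assumption_A1 (n : nat) (w : nat -> nat -> R) (p : nat -> R) : Prop :=
  forall i, (i < n)%nat -> leader_reach n w p i.

Definition laplacian (n : nat) (w : nat -> nat -> R) (i j : nat) : R :=
  if Nat.eqb i j then rsum n (fun l => w i l) else - w i j.

Definition Hmat (n : nat) (w : nat -> nat -> R) (p : nat -> R) (i j : nat) : R :=
  laplacian n w i j + (if Nat.eqb i j then p i else 0).

(* M = H (x) I_m, indexed by pairs: M_{(i,k),(j,l)} = H_ij * delta_kl. *)
Definition Mmat (n m : nat) (w : nat -> nat -> R) (p : nat -> R)
  (i k j l : nat) : R :=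
  Hmat n w p i j * (if Nat.eqb k l then 1 else 0).

Definition Mvec (n m : nat) (w : nat -> nat -> R) (p : nat -> R)
  (v : nat -> nat -> R) (i k : nat) : R :=
  rsum n (fun j => rsum m (fun l => Mmat n m w p i k j l * v j l)).

Definition Mquad (n m : nat) (w : nat -> nat -> R) (p : nat -> R)
  (v : nat -> nat -> R) : R :=
  rsum n (fun i => rsum m (fun k => v i k * Mvec n m w p v i k)).

Definition is_eigenvalue (n m : nat) (w : nat -> nat -> R) (p : nat -> R)
  (lam : R) : Prop :=
  exists v : nat -> nat -> R,
    (exists i k, (i < n)%nat /\ (k < m)%nat /\ v i k <> 0) /\
    (forall i k, (i < n)%nat -> (k < m)%nat -> Mvec n m w p v i k = lam * v i k).

Definition is_lambda_max n m w p (lam : R) : Prop :=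
  is_eigenvalue n m w p lam /\ forall mu, is_eigenvalue n m w p mu -> mu <= lam.

Definition is_lambda_min n m w p (lam : R) : Prop :=
  is_eigenvalue n m w p lam /\ forall mu, is_eigenvalue n m w p mu -> lam <= mu.

Definition deriv_within_from (t0 : R) (f : R -> R) (t d : R) : Prop :=
  forall eps, 0 < eps -> exists delta, 0 < delta /\
    forall h, h <> 0 -> Rabs h < delta -> t0 <= t + h ->
      Rabs ((f (t + h) - f t) / h - d) < eps.

Definition C1_from (t0 : R) (m : nat) (a0 da0 : nat -> R -> R) : Prop :=
  forall k, (k < m)%nat ->
    (forall t, t0 <= t -> deriv_within_from t0 (a0 k) t (da0 k t)) /\
    (forall t, t0 <= t -> forall eps, 0 < eps -> exists delta, 0 < delta /\
       forall s, t0 <= s -> Rabs (s - t) < delta -> Rabs (da0 k s - da0 k t) < eps).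

(* Lebesgue-null subset of R: coverable by countably many open intervals of
   arbitrarily small total length. *)
Definition null_set (E : R -> Prop) : Prop :=
  forall eps, 0 < eps -> exists c d : nat -> R,
    (forall j, c j <= d j) /\
    (forall t, E t -> exists j, c j < t /\ t < d j) /\
    (forall N, rsum N (fun j => d j - c j) < eps).

Definition abs_continuous_on (a b : R) (f : R -> R) : Prop :=
  forall eps, 0 < eps -> exists delta, 0 < delta /\
    forall (N : nat) (c d : nat -> R),
      (forall j, (j < N)%nat -> a <= c j /\ c j <= d j /\ d j <= b) ->
      (forall j j', (j < j')%nat -> (j' < N)%nat -> d j <= c j') ->
      rsum N (fun j => d j - c j) < delta ->
      rsum N (fun j => Rabs (f (d j) - f (c j))) < eps.

Definition in_SGN (z u : R) : Prop :=
  (0 < z -> u = 1) /\ (z < 0 -> u = -1) /\ (-1 <= u /\ u <= 1).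

(* s_i = sum_{j in N_i} w_ij (a_i - a_j) + p_i (a_i - a_0), component k, time t.
   (Terms with j not a neighbour have w_ij = 0 and vanish.) *)
Definition sliding_var (n : nat) (w : nat -> nat -> R) (p : nat -> R)
  (a : nat -> nat -> R -> R) (a0 : nat -> R -> R) (i k : nat) (t : R) : R :=
  rsum n (fun j => w i j * (a i k t - a j k t)) + p i * (a i k t - a0 k t).

(* a = (a_1..a_n), a_i : [t0,+oo) -> R^m, is a Filippov solution of
   da_i/dt = - beta sgn(s_i): absolutely continuous on every [t0,T], and for
   almost every t > t0 it is differentiable with
   da_i/dt in -beta SGN(s_i) (componentwise). *)
Definition filippov_solution (n m : nat) (w : nat -> nat -> R) (p : nat -> R)
  (beta t0 : R) (a0 : nat -> R -> R) (a : nat -> nat -> R -> R) : Prop :=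
  (forall i k T, (i < n)%nat -> (k < m)%nat -> t0 <= T ->
     abs_continuous_on t0 T (a i k)) /\
  exists Nul : R -> Prop, null_set Nul /\
    forall t, t0 < t -> ~ Nul t ->
      forall i k, (i < n)%nat -> (k < m)%nat ->
        exists dd u, derivable_pt_lim (a i k) t dd /\
          in_SGN (sliding_var n w p a a0 i k t) u /\ dd = - beta * u.

(* Main.v *)
Require Import Defs.
From Stdlib Require Import Reals Lra Lia Psatz List Classical ClassicalEpsilon.
Open Scope R_scope.


Lemma rsum_ext n f g : (forall i, (i < n)%nat -> f i = g i) -> rsum n f = rsum n g.
Proof. induction n; simpl; intros H; auto. rewrite IHn by (intros; apply H; lia). rewrite (H n) by lia; auto. Qed.

Lemma rsum_plus n f g : rsum n (fun i => f i + g i) = rsum n f + rsum n g.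
Proof. induction n; simpl; [lra|]. rewrite IHn; lra. Qed.

Lemma rsum_minus n f g : rsum n (fun i => f i - g i) = rsum n f - rsum n g.
Proof. induction n; simpl; [lra|]. rewrite IHn; lra. Qed.

Lemma rsum_scal n c f : rsum n (fun i => c * f i) = c * rsum n f.
Proof. induction n; simpl; [lra|]. rewrite IHn; lra. Qed.

Lemma rsum_scal_r n c f : rsum n (fun i => f i * c) = rsum n f * c.
Proof. induction n; simpl; [lra|]. rewrite IHn; lra. Qed.

Lemma rsum_opp n f : rsum n (fun i => - f i) = - rsum n f.
Proof. induction n; simpl; [lra|]. rewrite IHn; lra. Qed.

Lemma rsum_zero n : rsum n (fun _ => 0) = 0.
Proof. induction n; simpl; [lra|]. rewrite IHn; lra. Qed.

Lemma rsum_le n f g : (forall i, (i < n)%nat -> f i <= g i) -> rsum n f <= rsum n g.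
Proof. induction n; simpl; intros H; [lra|]. assert (rsum n f <= rsum n g) by (apply IHn; intros; apply H; lia).
  specialize (H n ltac:(lia)); lra. Qed.

Lemma rsum_lt n f g : (0 < n)%nat -> (forall i, (i < n)%nat -> f i < g i) -> rsum n f < rsum n g.
Proof. destruct n; [lia|]. intros _ H; simpl.
  assert (rsum n f <= rsum n g) by (apply rsum_le; intros; left; apply H; lia).
  specialize (H n ltac:(lia)); lra. Qed.

Lemma rsum_nonneg n f : (forall i, (i < n)%nat -> 0 <= f i) -> 0 <= rsum n f.
Proof. intros H. rewrite <- (rsum_zero n). apply rsum_le; auto. Qed.

Lemma rsum_term_le n f i : (forall j, (j < n)%nat -> 0 <= f j) -> (i < n)%nat -> f i <= rsum n f.
Proof. induction n; simpl; intros H Hi; [lia|].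
  destruct (Nat.eq_dec i n) as [->|Hne].
  - assert (0 <= rsum n f) by (apply rsum_nonneg; intros; apply H; lia). lra.
  - assert (f i <= rsum n f) by (apply IHn; [intros; apply H; lia| lia]).
    specialize (H n ltac:(lia)); lra. Qed.

Lemma rsum_zero_inv n f : (forall j, (j < n)%nat -> 0 <= f j) -> rsum n f = 0 ->
  forall i, (i < n)%nat -> f i = 0.
Proof. intros H Hs i Hi. pose proof (rsum_term_le n f i H Hi). specialize (H i Hi). lra. Qed.

Lemma rsum_swap n m (f : nat -> nat -> R) :
  rsum n (fun i => rsum m (fun j => f i j)) = rsum m (fun j => rsum n (fun i => f i j)).
Proof. induction n; simpl.
  - now rewrite rsum_zero.
  - rewrite IHn. now rewrite <- rsum_plus. Qed.

Lemma rsum_delta n i f : (i < n)%nat ->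
  rsum n (fun j => (if Nat.eqb i j then 1 else 0) * f j) = f i.
Proof. induction n; simpl; intros Hi; [lia|].
  destruct (Nat.eq_dec i n) as [->|Hne].
  - rewrite Nat.eqb_refl. rewrite (rsum_ext n _ (fun _ => 0)). rewrite rsum_zero; lra.
    intros j Hj. destruct (Nat.eqb_spec n j); [lia|lra].
  - rewrite IHn by lia. destruct (Nat.eqb_spec i n); [lia|lra]. Qed.

Lemma rsum_delta' n i f : (i < n)%nat ->
  rsum n (fun j => f j * (if Nat.eqb i j then 1 else 0)) = f i.
Proof. intros. rewrite <- (rsum_delta n i f H). apply rsum_ext; intros; lra. Qed.

Lemma rsum_abs n f : Rabs (rsum n f) <= rsum n (fun i => Rabs (f i)).
Proof. induction n; simpl.
  - rewrite Rabs_R0; lra.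
  - eapply Rle_trans; [apply Rabs_triang|]. lra. Qed.

Lemma rsum_shift N f : rsum (S N) f = f 0%nat + rsum N (fun j => f (S j)).
Proof. induction N.
  - simpl; lra.
  - change (rsum (S (S N)) f) with (rsum (S N) f + f (S N)). rewrite IHN. simpl; lra. Qed.

Lemma rsum_mono n n' f : (n <= n')%nat -> (forall j, (j < n')%nat -> 0 <= f j) -> rsum n f <= rsum n' f.
Proof. induction 1 as [|m Hle IHle]; intros H; [lra|]. simpl. specialize (IHle ltac:(intros; apply H; lia)).
  specialize (H m ltac:(lia)). lra. Qed.


Definition dotv n m (u v : nat -> nat -> R) := rsum n (fun i => rsum m (fun k => u i k * v i k)).
Definition sqv n m v := dotv n m v v.

Lemma sqv_nonneg n m v : 0 <= sqv n m v.
Proof. apply rsum_nonneg; intros; apply rsum_nonneg; intros; nra. Qed.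

Lemma dotv_ext n m u v u' v' : (forall i k, (i<n)%nat -> (k<m)%nat -> u i k * v i k = u' i k * v' i k) ->
  dotv n m u v = dotv n m u' v'.
Proof. intros H; apply rsum_ext; intros; apply rsum_ext; intros; auto. Qed.

Definition Kvec n m (K : nat -> nat -> nat -> nat -> R) (v : nat -> nat -> R) i k :=
  rsum n (fun j => rsum m (fun l => K i k j l * v j l)).

Lemma Kvec_sym n m K u v :
  (forall i k j l, (i<n)%nat -> (k<m)%nat -> (j<n)%nat -> (l<m)%nat -> K i k j l = K j l i k) ->
  dotv n m u (Kvec n m K v) = dotv n m v (Kvec n m K u).
Proof. intros HK. unfold dotv, Kvec.
  transitivity (rsum n (fun i => rsum m (fun k => rsum n (fun j => rsum m (fun l => u i k * K i k j l * v j l))))).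
  { apply rsum_ext; intros; apply rsum_ext; intros. rewrite <- rsum_scal. apply rsum_ext; intros.
    rewrite <- rsum_scal. apply rsum_ext; intros. ring. }
  transitivity (rsum n (fun j => rsum m (fun l => rsum n (fun i => rsum m (fun k => v j l * K j l i k * u i k))))).
  2:{ apply rsum_ext; intros; apply rsum_ext; intros. rewrite <- rsum_scal. apply rsum_ext; intros.
    rewrite <- rsum_scal. apply rsum_ext; intros. ring. }
  transitivity (rsum n (fun i => rsum n (fun j => rsum m (fun k => rsum m (fun l => u i k * K i k j l * v j l))))).
  { apply rsum_ext; intros. apply rsum_swap. }
  rewrite rsum_swap.
  apply rsum_ext; intros j Hj.
  transitivity (rsum n (fun i => rsum m (fun l => rsum m (fun k => u i k * K i k j l * v j l)))).
  { apply rsum_ext; intros. apply rsum_swap. }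
  rewrite rsum_swap. apply rsum_ext; intros l Hl. apply rsum_ext; intros i Hi. apply rsum_ext; intros k Hk.
  rewrite (HK i k j l) by auto. ring. Qed.

Section G.
Variables (n m : nat) (w : nat -> nat -> R) (p : nat -> R).
Hypothesis Hsym : forall i j, (i < n)%nat -> (j < n)%nat -> w i j = w j i.
Hypothesis Hdiag : forall i, (i < n)%nat -> w i i = 0.

Lemma Hmat_sym i j : (i<n)%nat -> (j<n)%nat -> Hmat n w p i j = Hmat n w p j i.
Proof. intros. unfold Hmat, laplacian. destruct (Nat.eqb_spec i j); destruct (Nat.eqb_spec j i); try lia.
  - subst; auto.
  - rewrite Hsym by auto; auto. Qed.

Lemma Mmat_sym i k j l : (i<n)%nat -> (j<n)%nat -> Mmat n m w p i k j l = Mmat n m w p j l i k.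
Proof. intros. unfold Mmat. rewrite Hmat_sym by auto. destruct (Nat.eqb_spec k l); destruct (Nat.eqb_spec l k); try lia; auto. Qed.

Lemma Hvec_eq i (x : nat -> R) : (i<n)%nat ->
  rsum n (fun j => Hmat n w p i j * x j) = rsum n (fun j => w i j * (x i - x j)) + p i * x i.
Proof. intros Hi. unfold Hmat, laplacian.
  transitivity (rsum n (fun j => (if Nat.eqb i j then 1 else 0) * ((rsum n (fun l => w i l) + p i) * x j)
     + - (w i j * x j) + (if Nat.eqb i j then 1 else 0) * (w i j * x j))).
  - apply rsum_ext; intros j Hj. destruct (Nat.eqb i j); ring.
  - rewrite !rsum_plus. rewrite !rsum_delta by auto. rewrite Hdiag by auto. rewrite rsum_opp.
    rewrite (rsum_ext n (fun j => w i j * (x i - x j)) (fun j => w i j * x i - w i j * x j)) by (intros; ring).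
    rewrite rsum_minus, rsum_scal_r. change (rsum n (fun l => w i l)) with (rsum n (w i)). ring. Qed.

Lemma Mvec_eq v i k : (i<n)%nat -> (k<m)%nat ->
  Mvec n m w p v i k = rsum n (fun j => w i j * (v i k - v j k)) + p i * v i k.
Proof. intros Hi Hk. unfold Mvec. rewrite <- (Hvec_eq i (fun j => v j k)) by auto.
  apply rsum_ext; intros j Hj. unfold Mmat.
  rewrite <- (rsum_delta m k (fun l => Hmat n w p i j * v j l)) by auto. apply rsum_ext; intros; ring. Qed.

Lemma Mvec_sliding a a0 i k t : (i<n)%nat -> (k<m)%nat ->
  Mvec n m w p (fun i k => a i k t - a0 k t) i k = sliding_var n w p a a0 i k t.
Proof. intros. rewrite Mvec_eq by auto. unfold sliding_var. f_equal. apply rsum_ext; intros; f_equal; ring. Qed.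

Lemma Mquad_sym u v : dotv n m u (Mvec n m w p v) = dotv n m v (Mvec n m w p u).
Proof. apply (Kvec_sym n m (Mmat n m w p)). intros; apply Mmat_sym; auto. Qed.

Lemma Mvec_lin u v a b i k : (i<n)%nat -> (k<m)%nat ->
  Mvec n m w p (fun j l => a * u j l + b * v j l) i k = a * Mvec n m w p u i k + b * Mvec n m w p v i k.
Proof. intros. unfold Mvec. rewrite <- !rsum_scal, <- rsum_plus. apply rsum_ext; intros.
  rewrite <- !rsum_scal, <- rsum_plus. apply rsum_ext; intros. ring. Qed.

Lemma Mquad_form v : Mquad n m w p v =
  rsum m (fun k => / 2 * rsum n (fun i => rsum n (fun j => w i j * (v i k - v j k) ^ 2))
                    + rsum n (fun i => p i * v i k ^ 2)).
Proof. unfold Mquad.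
  transitivity (rsum n (fun i => rsum m (fun k => v i k * rsum n (fun j => w i j * (v i k - v j k)) + p i * v i k ^ 2))).
  { apply rsum_ext; intros; apply rsum_ext; intros. rewrite Mvec_eq by auto. ring. }
  rewrite rsum_swap. apply rsum_ext; intros k Hk. rewrite rsum_plus. f_equal.
  set (S := rsum n (fun i => v i k * rsum n (fun j => w i j * (v i k - v j k)))).
  assert (E1 : S = rsum n (fun i => rsum n (fun j => w i j * v i k * (v i k - v j k)))).
  { unfold S; apply rsum_ext; intros. rewrite <- rsum_scal; apply rsum_ext; intros; ring. }
  assert (E2 : S = rsum n (fun i => rsum n (fun j => w i j * v j k * (v j k - v i k)))).
  { rewrite E1, rsum_swap. apply rsum_ext; intros; apply rsum_ext; intros. rewrite Hsym by auto. ring. }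
  assert (E3 : 2 * S = rsum n (fun i => rsum n (fun j => w i j * (v i k - v j k) ^ 2))).
  { replace (2*S) with (S + S) by ring. rewrite E1 at 1. rewrite E2. rewrite <- rsum_plus.
    apply rsum_ext; intros; rewrite <- rsum_plus; apply rsum_ext; intros; ring. }
  rewrite <- E3. field. Qed.

End G.


Lemma leader_reach_lt n w p i : leader_reach n w p i -> (i < n)%nat.
Proof. induction 1; auto. Qed.

Lemma Mquad_nonneg n m w p v : graph_ok n w p -> 0 <= Mquad n m w p v.
Proof. intros (Hs & Hw & Hd & Hp). rewrite Mquad_form by auto.
  apply rsum_nonneg; intros k Hk. apply Rplus_le_le_0_compat.
  - apply Rmult_le_pos; [lra|]. apply rsum_nonneg; intros; apply rsum_nonneg; intros.
    apply Rmult_le_pos; [apply Hw; auto| apply pow2_ge_0].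
  - apply rsum_nonneg; intros. apply Rmult_le_pos; [apply Hp; auto| apply pow2_ge_0]. Qed.

Lemma Mquad_zero n m w p v : graph_ok n w p -> assumption_A1 n w p -> Mquad n m w p v = 0 ->
  forall i k, (i < n)%nat -> (k < m)%nat -> v i k = 0.
Proof. intros G HA1 HQ. pose proof G as (Hs & Hw & Hd & Hp). rewrite Mquad_form in HQ by auto.
  assert (T: forall k, (k < m)%nat ->
     (forall i j, (i<n)%nat -> (j<n)%nat -> w i j * (v i k - v j k)^2 = 0) /\
     (forall i, (i<n)%nat -> p i * v i k ^2 = 0)).
  { intros k Hk.
    assert (N1: forall i j, (i<n)%nat -> (j<n)%nat -> 0 <= w i j * (v i k - v j k)^2).
    { intros; apply Rmult_le_pos; [apply Hw; auto| apply pow2_ge_0]. }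
    assert (N2: forall i, (i<n)%nat -> 0 <= p i * v i k ^2).
    { intros; apply Rmult_le_pos; [apply Hp; auto| apply pow2_ge_0]. }
    assert (S1: 0 <= rsum n (fun i => rsum n (fun j => w i j * (v i k - v j k) ^ 2)))
      by (apply rsum_nonneg; intros; apply rsum_nonneg; auto).
    assert (S2: 0 <= rsum n (fun i => p i * v i k ^ 2)) by (apply rsum_nonneg; auto).
    assert (NN: forall k', (k' < m)%nat -> 0 <= / 2 * rsum n (fun i => rsum n (fun j => w i j * (v i k' - v j k') ^ 2)) + rsum n (fun i => p i * v i k' ^ 2)).
    { intros k' Hk'. apply Rplus_le_le_0_compat; [apply Rmult_le_pos; [lra|]|];
       repeat (apply rsum_nonneg; intros); (apply Rmult_le_pos; [try apply Hw; try apply Hp; auto| apply pow2_ge_0]). }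
    pose proof (rsum_zero_inv m _ NN HQ k Hk) as Z.
    assert (HZ1: rsum n (fun i => rsum n (fun j => w i j * (v i k - v j k) ^ 2)) = 0) by lra.
    assert (HZ2: rsum n (fun i => p i * v i k ^ 2) = 0) by lra.
    split.
    - intros i j Hi Hj.
      assert (P1: forall a, (a < n)%nat -> 0 <= rsum n (fun b => w a b * (v a k - v b k) ^ 2)).
      { intros a Ha. apply rsum_nonneg; intros b Hb. apply N1; auto. }
      pose proof (rsum_zero_inv n _ P1 HZ1 i Hi) as HZ3.
      assert (P2: forall b, (b < n)%nat -> 0 <= w i b * (v i k - v b k) ^ 2) by (intros; apply N1; auto).
      exact (rsum_zero_inv n _ P2 HZ3 j Hj).
    - intros i Hi. exact (rsum_zero_inv n _ N2 HZ2 i Hi). }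
  intros i k Hi Hk. specialize (T k Hk). destruct T as [T1 T2].
  specialize (HA1 i Hi). induction HA1 as [i Hi' Hpi | i j Hr IH Hj Hwij].
  - specialize (T2 i Hi'). apply Rmult_integral in T2. destruct T2; [lra|]. nra.
  - pose proof (leader_reach_lt _ _ _ _ Hr) as Hi'. specialize (IH Hi').
    specialize (T1 i j Hi' Hj). apply Rmult_integral in T1. destruct T1; [lra|]. nra. Qed.

Lemma quad_nonneg_disc A B C : 0 <= C -> (forall t, 0 <= A + 2 * B * t + C * t ^ 2) -> B ^ 2 <= A * C.
Proof. intros HC H. destruct HC as [HC|HC].
  - specialize (H (- B / C)). replace (A + 2 * B * (- B / C) + C * (- B / C) ^ 2) with (A - B^2 / C) in H by (field; lra).
    assert (B^2/C <= A) by lra. apply (Rmult_le_compat_r C) in H0; [|lra].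
    replace (B ^ 2 / C * C) with (B^2) in H0 by (field; lra). lra.
  - subst C. destruct (Req_dec B 0) as [->|HB]; [nra|].
    specialize (H (- (A + 1) / (2 * B))). replace (A + 2 * B * (- (A + 1) / (2 * B)) + 0 * (- (A + 1) / (2 * B)) ^ 2) with (-1) in H by (field; auto). lra. Qed.

Lemma CS1 m x y : (rsum m (fun k => x k * y k)) ^ 2 <= rsum m (fun k => x k * x k) * rsum m (fun k => y k * y k).
Proof. rewrite Rmult_comm. apply quad_nonneg_disc.
  - apply rsum_nonneg; intros; exact (Rle_0_sqr _).
  - intros t. assert (E: rsum m (fun k => (y k + t * x k) * (y k + t * x k)) =
      rsum m (fun k => y k * y k) + 2 * rsum m (fun k => x k * y k) * t + rsum m (fun k => x k * x k) * t ^ 2).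
    { rewrite <- rsum_scal_r, <- rsum_scal, <- rsum_scal_r, <- !rsum_plus. apply rsum_ext; intros; ring. }
    rewrite <- E. apply rsum_nonneg; intros; exact (Rle_0_sqr _). Qed.

Lemma CS2 n m x y : (dotv n m x y) ^ 2 <= sqv n m x * sqv n m y.
Proof. rewrite Rmult_comm. apply quad_nonneg_disc.
  - apply sqv_nonneg.
  - intros t. assert (E: sqv n m (fun i k => y i k + t * x i k) =
      sqv n m y + 2 * dotv n m x y * t + sqv n m x * t ^ 2).
    { unfold sqv, dotv. rewrite <- rsum_scal_r, <- rsum_scal, <- rsum_scal_r, <- !rsum_plus. apply rsum_ext; intros.
      rewrite <- rsum_scal_r, <- rsum_scal, <- rsum_scal_r, <- !rsum_plus. apply rsum_ext; intros. ring. }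
    rewrite <- E. apply sqv_nonneg. Qed.

Lemma sq_le_sqrt a b c : 0 <= b -> 0 <= c -> a ^ 2 <= b * c -> a <= sqrt b * sqrt c.
Proof. intros Hb Hc H. rewrite <- sqrt_mult by auto. destruct (Rle_or_lt a 0).
  - pose proof (sqrt_pos (b*c)); lra.
  - apply Rsqr_incr_0_var; [| apply sqrt_pos]. rewrite Rsqr_sqrt by nra. unfold Rsqr; nra. Qed.

Lemma CS1' m x y : rsum m (fun k => x k * y k) <= sqrt (rsum m (fun k => x k * x k)) * sqrt (rsum m (fun k => y k * y k)).
Proof. apply sq_le_sqrt; try (apply rsum_nonneg; intros; nra). apply CS1. Qed.

Lemma CS2' n m x y : dotv n m x y <= sqrt (sqv n m x) * sqrt (sqv n m y).
Proof. apply sq_le_sqrt; try apply sqv_nonneg. apply CS2. Qed.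

Lemma l1_l2 m x : sqrt (rsum m (fun k => x k * x k)) <= rsum m (fun k => Rabs (x k)).
Proof. assert (H: rsum m (fun k => x k * x k) <= (rsum m (fun k => Rabs (x k))) ^ 2).
  { induction m; simpl; [lra|]. assert (0 <= rsum m (fun k => Rabs (x k))) by (apply rsum_nonneg; intros; apply Rabs_pos).
    pose proof (Rabs_pos (x m)). replace (x m * x m) with (Rabs (x m) * Rabs (x m)).
    2:{ rewrite <- Rabs_mult. apply Rabs_right. nra. }
    simpl in IHm. nra. }
  assert (0 <= rsum m (fun k => Rabs (x k))) by (apply rsum_nonneg; intros; apply Rabs_pos).
  rewrite <- (sqrt_pow2 (rsum m (fun k => Rabs (x k)))) by auto. apply sqrt_le_1_alt. lra. Qed.


Lemma incr_mono (phi : nat -> nat) : (forall a, (phi a < phi (S a))%nat) -> forall a b, (a < b)%nat -> (phi a < phi b)%nat.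
Proof. intros H a b Hab. induction Hab; [apply H|]. specialize (H m). lia. Qed.

Lemma incr_ge (phi : nat -> nat) : (forall a, (phi a < phi (S a))%nat) -> forall a, (a <= phi a)%nat.
Proof. intros H a. induction a; [lia|]. specialize (H a). lia. Qed.

Lemma Un_cv_sub u l psi : Un_cv u l -> (forall a, (psi a < psi (S a))%nat) -> Un_cv (fun a => u (psi a)) l.
Proof. intros Hc Hp eps He. destruct (Hc eps He) as [N HN]. exists N. intros a Ha. apply HN.
  pose proof (incr_ge psi Hp a). lia. Qed.

Lemma inv_small eps : 0 < eps -> exists N, (0 < N)%nat /\ forall a, (N <= a)%nat -> / (INR a + 1) < eps.
Proof. intros He. destruct (archimed_cor1 eps He) as [N [HN HN0]]. exists N. split; auto. intros a Ha.
  apply le_INR in Ha. assert (0 < INR N) by (apply lt_0_INR; auto).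
  eapply Rle_lt_trans; [|apply HN]. apply Rinv_le_contravar; lra. Qed.

Lemma BW1 (u : nat -> R) : (forall N, -1 <= u N <= 1) ->
  exists phi l, (forall a, (phi a < phi (S a))%nat) /\ Un_cv (fun a => u (phi a)) l.
Proof. intros Hb. destruct (Bolzano_Weierstrass u (fun c => -1 <= c <= 1) (compact_P3 (-1) 1) Hb) as [l Hl].
  assert (Hsel: forall k N : nat, exists q, (N <= q)%nat /\ Rabs (u q - l) < / (INR k + 1)).
  { intros k N. assert (Hp: 0 < / (INR k + 1)) by (apply Rinv_0_lt_compat; pose proof (pos_INR k); lra).
    destruct (Hl (fun y => Rabs (y - l) < / (INR k + 1)) N) as [q [Hq1 Hq2]].
    - exists (mkposreal _ Hp). intros y Hy. exact Hy.
    - exists q; auto. }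
  set (sel := fun k N => proj1_sig (constructive_indefinite_description _ (Hsel k N))).
  assert (Hs: forall k N, (N <= sel k N)%nat /\ Rabs (u (sel k N) - l) < / (INR k + 1)).
  { intros; unfold sel; destruct (constructive_indefinite_description _ _); auto. }
  set (phi := fix f a := match a with O => sel O O | S a' => sel (S a') (S (f a')) end).
  exists phi, l. split.
  - intros a. simpl. destruct (Hs (S a) (S (phi a))). lia.
  - intros eps He. destruct (inv_small eps He) as [N [HN0 HN]]. exists N. intros a Ha. unfold R_dist.
    assert (Rabs (u (phi a) - l) < / (INR a + 1)).
    { destruct a; simpl; apply Hs. }
    specialize (HN a ltac:(lia)). lra. Qed.

Lemma BWn (U : nat -> nat -> nat -> R) (cs : list (nat * nat)) :
  (forall N i k, In (i, k) cs -> -1 <= U N i k <= 1) ->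
  exists phi (v : nat -> nat -> R), (forall a, (phi a < phi (S a))%nat) /\
    forall i k, In (i, k) cs -> Un_cv (fun a => U (phi a) i k) (v i k).
Proof. induction cs as [|[i0 k0] cs IH]; intros Hb.
  - exists (fun a => a), (fun _ _ => 0). split; [intros; lia| intros i k []].
  - destruct IH as [phi [v [Hphi Hv]]]. { intros; apply Hb; simpl; auto. }
    destruct (BW1 (fun a => U (phi a) i0 k0)) as [psi [l [Hpsi Hl]]]. { intros; apply Hb; simpl; auto. }
    exists (fun a => phi (psi a)), (fun i k => if (Nat.eqb i i0 && Nat.eqb k k0)%bool then l else v i k).
    split.
    + intros a. apply incr_mono; auto.
    + intros i k Hin. destruct (Nat.eqb_spec i i0); destruct (Nat.eqb_spec k k0); simpl.
      * subst. exact Hl.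
      * destruct Hin as [E|Hin]; [inversion E; lia|]. apply (Un_cv_sub (fun a => U (phi a) i k)); auto.
      * destruct Hin as [E|Hin]; [inversion E; lia|]. apply (Un_cv_sub (fun a => U (phi a) i k)); auto.
      * destruct Hin as [E|Hin]; [inversion E; lia|]. apply (Un_cv_sub (fun a => U (phi a) i k)); auto. Qed.

Lemma cv_rsum n (f : nat -> nat -> R) (l : nat -> R) :
  (forall i, (i < n)%nat -> Un_cv (fun a => f a i) (l i)) -> Un_cv (fun a => rsum n (f a)) (rsum n l).
Proof. induction n; intros H; simpl.
  - intros eps He; exists O; intros; unfold R_dist; rewrite Rminus_diag, Rabs_R0; auto.
  - apply CV_plus; [apply IHn; intros; apply H; lia| apply H; lia]. Qed.

Lemma cv_const c : Un_cv (fun _ => c) c.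
Proof. intros eps He; exists O; intros; unfold R_dist; rewrite Rminus_diag, Rabs_R0; auto. Qed.


Lemma Un_cv_ext u u' l : (forall a, u a = u' a) -> Un_cv u l -> Un_cv u' l.
Proof. intros E H eps He. destruct (H eps He) as [N HN]; exists N; intros; rewrite <- E; auto. Qed.

Section Spec.
Variables (n m : nat) (w : nat -> nat -> R) (p : nat -> R).
Hypothesis Hsym : forall i j, (i < n)%nat -> (j < n)%nat -> w i j = w j i.

Notation Q := (Mquad n m w p).
Notation MV := (Mvec n m w p).

Lemma Mvec_ext u u' : (forall i k, (i<n)%nat -> (k<m)%nat -> u i k = u' i k) -> forall i k, MV u i k = MV u' i k.
Proof. intros H i k. unfold Mvec. apply rsum_ext; intros; apply rsum_ext; intros. rewrite H; auto. Qed.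

Lemma Mquad_ext u u' : (forall i k, (i<n)%nat -> (k<m)%nat -> u i k = u' i k) -> Q u = Q u'.
Proof. intros H. unfold Mquad. apply rsum_ext; intros; apply rsum_ext; intros. rewrite H by auto.
  rewrite (Mvec_ext u u' H). auto. Qed.

Lemma Mvec_affine v h t i k : MV (fun j l => v j l + t * h j l) i k = MV v i k + t * MV h i k.
Proof. unfold Mvec. rewrite <- rsum_scal, <- rsum_plus. apply rsum_ext; intros.
  rewrite <- rsum_scal, <- rsum_plus. apply rsum_ext; intros. ring. Qed.

Lemma Mvec_scal c u i k : MV (fun j l => c * u j l) i k = c * MV u i k.
Proof. unfold Mvec. rewrite <- rsum_scal. apply rsum_ext; intros.
  rewrite <- rsum_scal. apply rsum_ext; intros. ring. Qed.

Lemma Mquad_scal c u : Q (fun i k => c * u i k) = c ^ 2 * Q u.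
Proof. unfold Mquad. rewrite <- rsum_scal. apply rsum_ext; intros.
  rewrite <- rsum_scal. apply rsum_ext; intros. rewrite Mvec_scal. ring. Qed.

Lemma sqv_scal c u : sqv n m (fun i k => c * u i k) = c ^ 2 * sqv n m u.
Proof. unfold sqv, dotv. rewrite <- rsum_scal. apply rsum_ext; intros.
  rewrite <- rsum_scal. apply rsum_ext; intros. ring. Qed.

Lemma Q_expand v h t : Q (fun i k => v i k + t * h i k) = Q v + 2 * t * dotv n m h (MV v) + t ^ 2 * Q h.
Proof. change (Q (fun i k => v i k + t * h i k)) with (dotv n m (fun i k => v i k + t * h i k) (MV (fun i k => v i k + t * h i k))).
  pose proof (Mquad_sym n m w p Hsym v h) as Sy.
  change (Q v) with (dotv n m v (MV v)). change (Q h) with (dotv n m h (MV h)).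
  transitivity (dotv n m v (MV v) + t * dotv n m v (MV h) + t * dotv n m h (MV v) + t ^ 2 * dotv n m h (MV h)).
  - unfold dotv. rewrite <- !rsum_scal, <- !rsum_plus. apply rsum_ext; intros.
    rewrite <- !rsum_scal, <- !rsum_plus. apply rsum_ext; intros. rewrite Mvec_affine. ring.
  - rewrite Sy. ring. Qed.

Lemma sqv_expand v h t : sqv n m (fun i k => v i k + t * h i k) = sqv n m v + 2 * t * dotv n m h v + t ^ 2 * sqv n m h.
Proof. unfold sqv, dotv. rewrite <- !rsum_scal, <- !rsum_plus. apply rsum_ext; intros.
  rewrite <- !rsum_scal, <- !rsum_plus. apply rsum_ext; intros. ring. Qed.

Lemma sqv_zero u : sqv n m u = 0 -> forall i k, (i<n)%nat -> (k<m)%nat -> u i k = 0.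
Proof. intros H i k Hi Hk. unfold sqv, dotv in H.
  assert (P1: forall a, (a < n)%nat -> 0 <= rsum m (fun b => u a b * u a b)) by (intros; apply rsum_nonneg; intros; exact (Rle_0_sqr _)).
  pose proof (rsum_zero_inv n _ P1 H i Hi) as H2. cbv beta in H2.
  assert (P2: forall b, (b < m)%nat -> 0 <= u i b * u i b) by (intros; exact (Rle_0_sqr _)).
  pose proof (rsum_zero_inv m _ P2 H2 k Hk) as H3. cbv beta in H3. nra. Qed.

Lemma comp_le u i k : (i<n)%nat -> (k<m)%nat -> u i k * u i k <= sqv n m u.
Proof. intros Hi Hk. unfold sqv, dotv. eapply Rle_trans; [|apply (rsum_term_le n _ i); auto].
  - cbv beta. apply (rsum_term_le m (fun b => u i b * u i b) k); auto. intros j _; exact (Rle_0_sqr (u i j)).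
  - intros; apply rsum_nonneg; intros; exact (Rle_0_sqr _). Qed.

Definition Kb := rsum n (fun i => rsum m (fun k => rsum n (fun j => rsum m (fun l => Rabs (Mmat n m w p i k j l))))).

Lemma Q_bound u : (forall i k, (i<n)%nat -> (k<m)%nat -> Rabs (u i k) <= 1) -> Q u <= Kb.
Proof. intros H. unfold Mquad, Kb. apply rsum_le; intros i Hi; apply rsum_le; intros k Hk. unfold Mvec.
  rewrite <- rsum_scal. apply rsum_le; intros j Hj. rewrite <- rsum_scal. apply rsum_le; intros l Hl.
  specialize (H i k Hi Hk) as H1. specialize (H j l Hj Hl) as H2.
  eapply Rle_trans; [apply Rle_abs|]. rewrite !Rabs_mult.
  pose proof (Rabs_pos (u i k)). pose proof (Rabs_pos (u j l)). pose proof (Rabs_pos (Mmat n m w p i k j l)).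
  assert (Rabs (Mmat n m w p i k j l) * Rabs (u j l) <= Rabs (Mmat n m w p i k j l)) by nra.
  assert (0 <= Rabs (Mmat n m w p i k j l) * Rabs (u j l)) by nra. nra. Qed.

Lemma Q_zero : Q (fun _ _ => 0) = 0.
Proof. unfold Mquad. rewrite (rsum_ext n _ (fun _ => 0)); [apply rsum_zero|]. intros.
  rewrite (rsum_ext m _ (fun _ => 0)); [apply rsum_zero|]. intros. ring. Qed.

Lemma spec_max : (0 < n)%nat -> (0 < m)%nat ->
  exists mu, is_eigenvalue n m w p mu /\ forall u, Q u <= mu * sqv n m u.
Proof. intros Hn Hm.
  set (A := fun x => exists u, sqv n m u = 1 /\ x = Q u).
  set (e00 := fun i k : nat => (if Nat.eqb 0 i then 1 else 0) * ((if Nat.eqb 0 k then 1 else 0) * 1)).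
  assert (He00 : sqv n m e00 = 1).
  { unfold sqv, dotv, e00.
    rewrite (rsum_ext n _ (fun i => (if Nat.eqb 0 i then 1 else 0) * rsum m (fun k => (if Nat.eqb 0 k then 1 else 0) * 1))).
    - rewrite rsum_delta by auto. rewrite rsum_delta by auto. auto.
    - intros i Hi. rewrite <- rsum_scal. apply rsum_ext; intros k Hk.
      destruct (Nat.eqb 0 i); destruct (Nat.eqb 0 k); ring. }
  assert (Hub: forall u, sqv n m u = 1 -> Q u <= Kb).
  { intros u Hu. apply Q_bound. intros i k Hi Hk. pose proof (comp_le u i k Hi Hk) as H0.
    rewrite Hu in H0. rewrite <- Rabs_R1. apply Rsqr_le_abs_0. unfold Rsqr. lra. }
  destruct (completeness A) as [mu [Hmu1 Hmu2]].
  { exists Kb. intros x [u [Hu ->]]. auto. }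
  { exists (Q e00), e00. auto. }
  assert (Hle1: forall u, sqv n m u = 1 -> Q u <= mu) by (intros u Hu; apply Hmu1; exists u; auto).
  assert (Hle: forall u, Q u <= mu * sqv n m u).
  { intros u. destruct (Req_dec (sqv n m u) 0) as [H0|H0].
    - rewrite (Mquad_ext u (fun _ _ => 0)) by (apply sqv_zero; auto). rewrite Q_zero, H0. lra.
    - pose proof (sqv_nonneg n m u). set (c := sqrt (sqv n m u)).
      assert (Hc: 0 < c) by (apply sqrt_lt_R0; lra).
      assert (Hc2: c ^ 2 = sqv n m u) by (unfold c; simpl; rewrite Rmult_1_r; apply sqrt_sqrt; lra).
      specialize (Hle1 (fun i k => / c * u i k)). rewrite sqv_scal, Mquad_scal in Hle1.
      rewrite <- Hc2 in Hle1 |- *. replace ((/ c) ^ 2 * c ^ 2) with 1 in Hle1 by (field; lra).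
      specialize (Hle1 eq_refl). apply (Rmult_le_compat_r (c^2)) in Hle1; [|nra].
      replace ((/ c) ^ 2 * Q u * c ^ 2) with (Q u) in Hle1 by (field; lra). lra. }
  assert (Hseq: forall N : nat, exists u, sqv n m u = 1 /\ mu - / (INR N + 1) < Q u).
  { intros N. apply NNPP. intros Hno.
    assert (Hpos: 0 < / (INR N + 1)) by (apply Rinv_0_lt_compat; pose proof (pos_INR N); lra).
    assert (mu <= mu - / (INR N + 1)); [|lra].
    apply Hmu2. intros x [u [Hu ->]]. apply Rnot_lt_le. intros Hlt. apply Hno. exists u; auto. }
  set (U := fun N => proj1_sig (constructive_indefinite_description _ (Hseq N))).
  assert (HU: forall N, sqv n m (U N) = 1 /\ mu - / (INR N + 1) < Q (U N)).
  { intros; unfold U; destruct (constructive_indefinite_description _ _); auto. }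
  set (cs := list_prod (seq 0 n) (seq 0 m)).
  assert (Hcs: forall i k, In (i, k) cs <-> (i < n)%nat /\ (k < m)%nat).
  { intros. unfold cs. rewrite in_prod_iff, !in_seq. lia. }
  destruct (BWn U cs) as [phi [v [Hphi Hv]]].
  { intros N i k Hin. apply Hcs in Hin. destruct Hin as [Hi Hk]. pose proof (comp_le (U N) i k Hi Hk) as H0.
    rewrite (proj1 (HU N)) in H0. assert (HH: Rabs (U N i k) <= 1).
    { rewrite <- Rabs_R1. apply Rsqr_le_abs_0. unfold Rsqr. lra. }
    unfold Rabs in HH; destruct (Rcase_abs (U N i k)); lra. }
  assert (Hv': forall i k, (i<n)%nat -> (k<m)%nat -> Un_cv (fun a => U (phi a) i k) (v i k)).
  { intros; apply Hv; apply Hcs; auto. }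
  assert (Hsq: Un_cv (fun a => sqv n m (U (phi a))) (sqv n m v)).
  { unfold sqv, dotv. apply cv_rsum; intros i Hi. apply cv_rsum; intros k Hk. apply CV_mult; apply Hv'; auto. }
  assert (Hsq1: sqv n m v = 1).
  { apply (UL_sequence (fun a => sqv n m (U (phi a)))); auto. apply (Un_cv_ext (fun _ => 1)); [|apply cv_const].
    intros a; rewrite (proj1 (HU (phi a))); auto. }
  assert (HQv: Un_cv (fun a => Q (U (phi a))) (Q v)).
  { unfold Mquad. apply cv_rsum; intros i Hi. apply cv_rsum; intros k Hk. apply CV_mult; [apply Hv'; auto|].
    unfold Mvec. apply cv_rsum; intros j Hj. apply cv_rsum; intros l Hl. apply CV_mult; [apply cv_const|apply Hv'; auto]. }
  assert (HQmu: Un_cv (fun a => Q (U (phi a))) mu).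
  { intros eps He. destruct (inv_small eps He) as [N [HN0 HN]]. exists N. intros a Ha. unfold R_dist.
    pose proof (HU (phi a)) as [H1 H2]. pose proof (Hle1 _ H1).
    pose proof (incr_ge phi Hphi a). specialize (HN (phi a) ltac:(lia)).
    rewrite Rabs_left1 by lra. lra. }
  assert (HQ: Q v = mu) by (apply (UL_sequence _ _ _ HQv HQmu)).
  exists mu. split; [|exact Hle].
  set (h := fun i k => mu * v i k - MV v i k).
  assert (HB: sqv n m h = 0).
  { assert (Hq: forall t, 0 <= 0 + 2 * (mu * dotv n m h v - dotv n m h (MV v)) * t + (mu * sqv n m h - Q h) * t ^ 2).
    { intros t. specialize (Hle (fun i k => v i k + t * h i k)). rewrite Q_expand, sqv_expand in Hle.
      rewrite HQ, Hsq1 in Hle. lra. }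
    apply quad_nonneg_disc in Hq; [| specialize (Hle h); lra].
    assert (E: mu * dotv n m h v - dotv n m h (MV v) = sqv n m h).
    { unfold sqv, dotv, h. rewrite <- rsum_scal, <- rsum_minus. apply rsum_ext; intros.
      rewrite <- rsum_scal, <- rsum_minus. apply rsum_ext; intros. ring. }
    rewrite E in Hq. nra. }
  exists v. split.
  - apply NNPP. intros Hno. assert (sqv n m v = 0); [|lra].
    unfold sqv, dotv. rewrite (rsum_ext n _ (fun _ => 0)); [apply rsum_zero|]. intros i Hi.
    rewrite (rsum_ext m _ (fun _ => 0)); [apply rsum_zero|]. intros k Hk.
    destruct (Req_dec (v i k) 0) as [E|E]; [rewrite E; ring|]. exfalso; apply Hno; exists i, k; auto.
  - intros i k Hi Hk. pose proof (sqv_zero h HB i k Hi Hk) as E. unfold h in E. lra.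
Qed.
End Spec.


Lemma Mvec_neg n m w p v i k :
  Mvec n m (fun i j => - w i j) (fun i => - p i) v i k = - Mvec n m w p v i k.
Proof. unfold Mvec. rewrite <- rsum_opp. apply rsum_ext; intros j Hj. rewrite <- rsum_opp.
  apply rsum_ext; intros l Hl. unfold Mmat, Hmat, laplacian. destruct (Nat.eqb i j).
  - rewrite rsum_opp. change (rsum n (fun l0 => w i l0)) with (rsum n (w i)). ring.
  - ring. Qed.

Lemma eig_dims n m w p mu : is_eigenvalue n m w p mu -> (0 < n)%nat /\ (0 < m)%nat.
Proof. intros [v [[i [k [Hi [Hk _]]]] _]]. lia. Qed.

Lemma Rayleigh_max n m w p lmax : (forall i j, (i<n)%nat -> (j<n)%nat -> w i j = w j i) ->
  is_lambda_max n m w p lmax -> forall u, Mquad n m w p u <= lmax * sqv n m u.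
Proof. intros Hs [He Hmax] u. destruct (eig_dims _ _ _ _ _ He) as [Hn Hm].
  destruct (spec_max n m w p Hs Hn Hm) as [mu [Hmu Hle]]. specialize (Hmax mu Hmu).
  pose proof (sqv_nonneg n m u). specialize (Hle u). nra. Qed.

Lemma Rayleigh_min n m w p lmin : (forall i j, (i<n)%nat -> (j<n)%nat -> w i j = w j i) ->
  is_lambda_min n m w p lmin -> forall u, lmin * sqv n m u <= Mquad n m w p u.
Proof. intros Hs [He Hmin] u. destruct (eig_dims _ _ _ _ _ He) as [Hn Hm].
  destruct (spec_max n m (fun i j => - w i j) (fun i => - p i)) as [mu [Hmu Hle]]; auto.
  { intros; rewrite Hs; auto. }
  assert (He': is_eigenvalue n m w p (- mu)).
  { destruct Hmu as [v [Hnz Hev]]. exists v. split; auto. intros i k Hi Hk. specialize (Hev i k Hi Hk).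
    rewrite Mvec_neg in Hev. lra. }
  specialize (Hmin _ He'). specialize (Hle u).
  assert (Mquad n m (fun i j => - w i j) (fun i => - p i) u = - Mquad n m w p u).
  { unfold Mquad. rewrite <- rsum_opp. apply rsum_ext; intros; rewrite <- rsum_opp; apply rsum_ext; intros.
    rewrite Mvec_neg; ring. }
  pose proof (sqv_nonneg n m u). nra. Qed.

Lemma lmin_pos n m w p lmin : graph_ok n w p -> assumption_A1 n w p -> is_lambda_min n m w p lmin -> 0 < lmin.
Proof. intros G HA [[v [[i [k [Hi [Hk Hnz]]]] Hev]] _].
  assert (HQ: Mquad n m w p v = lmin * sqv n m v).
  { unfold Mquad, sqv, dotv. rewrite <- rsum_scal. apply rsum_ext; intros; rewrite <- rsum_scal; apply rsum_ext; intros.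
    rewrite Hev by auto. ring. }
  assert (Hs: 0 < sqv n m v).
  { destruct (sqv_nonneg n m v) as [H|H]; auto. exfalso. apply Hnz. apply (sqv_zero n m v); auto. }
  pose proof (Mquad_nonneg n m w p v G) as H0. destruct H0 as [H0|H0].
  - rewrite HQ in H0. nra.
  - exfalso. apply Hnz. apply (Mquad_zero n m w p v G HA); auto. Qed.


Lemma Rmin_spec x y : (x <= y /\ Rmin x y = x) \/ (y < x /\ Rmin x y = y).
Proof. unfold Rmin; destruct (Rle_dec x y); [left|right]; split; auto; lra. Qed.

Lemma real_ind (a b : R) (Q : R -> Prop) : a <= b -> Q a ->
  (forall u, a <= u < b -> Q u -> exists eta, 0 < eta /\ forall v, u < v < u + eta -> v <= b -> Q v) ->
  (forall u, a < u <= b -> (forall v, a <= v < u -> Q v) -> Q u) -> Q b.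
Proof. intros Hab Qa Hi Hii.
  set (S := fun x => a <= x <= b /\ forall v, a <= v <= x -> Q v).
  destruct (completeness S) as [s [Hs1 Hs2]].
  { exists b. intros x [Hx _]. lra. }
  { exists a. split; [lra|]. intros v Hv. replace v with a by lra. auto. }
  assert (Has: a <= s). { apply Hs1. split; [lra|]. intros v Hv. replace v with a by lra. auto. }
  assert (Hsb: s <= b). { apply Hs2. intros x [Hx _]. lra. }
  assert (Hbelow: forall v, a <= v < s -> Q v).
  { intros v Hv. apply NNPP; intro Hno. assert (s <= v); [|lra]. apply Hs2. intros x [Hx Hx2].
    apply Rnot_lt_le. intros Hlt. apply Hno. apply Hx2. lra. }
  assert (Qs: Q s). { destruct (Req_dec s a) as [->|Hne]; auto. apply Hii; [lra|auto]. }
  assert (Ss: forall v, a <= v <= s -> Q v). { intros v Hv. destruct (Req_dec v s) as [->|]; auto. apply Hbelow; lra. }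
  destruct (Req_dec s b) as [<-|Hne]; auto.
  destruct (Hi s ltac:(lra) Qs) as [eta [Heta Hext]].
  set (v' := Rmin (s + eta / 2) b).
  assert (v' <= s); [|unfold v' in *; destruct (Rmin_spec (s + eta/2) b) as [[? ?]|[? ?]]; lra].
  apply Hs1. split; [unfold v'; destruct (Rmin_spec (s + eta/2) b) as [[? ?]|[? ?]]; lra|].
  intros v Hv. destruct (Rle_or_lt v s); [apply Ss; lra|]. apply Hext; unfold v' in *;
  destruct (Rmin_spec (s + eta/2) b) as [[? ?]|[? ?]]; lra. Qed.

Definition sumL (f : R * R * nat -> R) (L : list (R * R * nat)) : R :=
  fold_right (fun x acc => f x + acc) 0 L.

Definition idx (L : list (R * R * nat)) := map (fun x => snd x) L.

Lemma rsum_nth (L : list (R*R*nat)) f x0 :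
  rsum (length L) (fun j => f (nth j L x0)) = sumL f L.
Proof. induction L as [|x L IH]; [simpl; auto|]. change (length (x :: L)) with (S (length L)). rewrite rsum_shift. simpl nth. rewrite IH. simpl. auto. Qed.

Lemma NoDup_snoc (l : list nat) j : NoDup l -> ~ In j l -> NoDup (l ++ j :: nil).
Proof. induction l as [|x l IH]; simpl; intros H Hn.
  - constructor; [auto|constructor].
  - inversion H; subst. constructor.
    + rewrite in_app_iff. simpl. intros [H1|[H1|[]]]; [auto|]. apply Hn; auto.
    + apply IH; auto. Qed.

Lemma sum_nodup (l : list nat) (f : nat -> R) N : NoDup l -> (forall j, In j l -> (j < N)%nat) ->
  (forall j, 0 <= f j) -> fold_right (fun j acc => f j + acc) 0 l <= rsum N f.
Proof. intros Hnd Hlt Hf.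
  assert (E: forall l, NoDup l -> (forall j, In j l -> (j < N)%nat) ->
     fold_right (fun j acc => f j + acc) 0 l = rsum N (fun j => if in_dec Nat.eq_dec j l then f j else 0)).
  { clear l Hnd Hlt. intros l; induction l as [|x l IH]; intros Hnd Hlt.
    - simpl. rewrite rsum_zero; auto.
    - inversion Hnd; subst. change (fold_right (fun j acc => f j + acc) 0 (x :: l)) with (f x + fold_right (fun j acc => f j + acc) 0 l). rewrite IH by (auto; intros; apply Hlt; simpl; auto).
      rewrite <- (rsum_delta N x f) at 1 by (apply Hlt; simpl; auto). rewrite <- rsum_plus.
      apply rsum_ext; intros j Hj. destruct (Nat.eqb_spec x j).
      + subst. destruct (in_dec Nat.eq_dec j l) as [Hq|Hq]; [contradiction|]. destruct (in_dec Nat.eq_dec j (j :: l)) as [Hr|Hr]; [simpl; ring|exfalso; apply Hr; simpl; auto].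
      + destruct (in_dec Nat.eq_dec j (x :: l)) as [Hin|Hin]; destruct (in_dec Nat.eq_dec j l) as [Hin'|Hin']; try (simpl; ring).
        * destruct Hin; [congruence|contradiction].
        * exfalso; apply Hin; simpl; auto. }
  rewrite E by auto. apply rsum_le; intros. destruct (in_dec Nat.eq_dec i l); [lra| apply Hf]. Qed.


Section Chain.
Variables (g : R -> R) (cc dd : nat -> R).

Fixpoint chainF (prev : R) (L : list (R * R * nat)) (u : R) : Prop :=
  match L with
  | nil => prev <= u /\ g u <= g prev
  | ((c, d), j) :: L' => prev <= c /\ c <= d /\ g c <= g prev /\ cc j < c /\ d < dd j /\ chainF d L' u
  end.

Lemma chain_le prev L u : chainF prev L u -> prev <= u.
Proof. revert prev; induction L as [|[[c d] j] L IH]; simpl; intros prev H; [tauto|].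
  destruct H as (H1 & H2 & _ & _ & _ & H3). apply IH in H3. lra. Qed.

Lemma chain_bounds prev L u : chainF prev L u -> forall x, In x L -> prev <= fst (fst x) /\ fst (fst x) <= snd (fst x) /\ snd (fst x) <= u.
Proof. revert prev; induction L as [|[[c d] j] L IH]; simpl; intros prev H x Hx; [tauto|].
  destruct H as (H1 & H2 & _ & _ & _ & H3). destruct Hx as [<-|Hx].
  - simpl. apply chain_le in H3. lra.
  - specialize (IH d H3 x Hx). lra. Qed.

Lemma chain_extend prev L v u : chainF prev L v -> v <= u -> g u <= g v -> chainF prev L u.
Proof. revert prev; induction L as [|[[c d] j] L IH]; simpl; intros prev H Hvu Hg.
  - lra.
  - destruct H as (H1 & H2 & H3 & H4 & H5 & H6). repeat split; auto. Qed.

Lemma chain_weaken prev prev' L u : chainF prev' L u -> prev <= prev' -> g prev' <= g prev -> chainF prev L u.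
Proof. destruct L as [|[[c d] j] L]; simpl; intros H H1 H2.
  - lra.
  - destruct H as (H3 & H4 & H5 & H6 & H7 & H8). repeat split; auto; lra. Qed.

Lemma chain_app prev L v L2 u : chainF prev L v -> chainF v L2 u -> chainF prev (L ++ L2) u.
Proof. revert prev; induction L as [|[[c d] j] L IH]; simpl; intros prev H H2.
  - apply (chain_weaken prev v); tauto.
  - destruct H as (H3 & H4 & H5 & H6 & H7 & H8). repeat split; auto. Qed.

Lemma chain_merge prev L v u j : chainF prev L v -> In j (idx L) -> v <= u -> u < dd j ->
  exists L2 rest, chainF prev L2 u /\ idx L = idx L2 ++ rest.
Proof. revert prev; induction L as [|[[c d] k] L IH]; simpl; intros prev H Hin Hvu Hu; [tauto|].
  destruct H as (H1 & H2 & H3 & H4 & H5 & H6).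
  destruct (Nat.eq_dec k j) as [<-|Hne].
  - exists (((c, u), k) :: nil), (idx L). simpl. split; auto.
    apply chain_le in H6. repeat split; auto; lra.
  - destruct Hin as [E|Hin]; [congruence|].
    destruct (IH d H6 Hin Hvu Hu) as [L2 [rest [HL2 Hinc]]].
    exists (((c, d), k) :: L2), rest. simpl. split.
    + repeat split; auto.
    + rewrite Hinc; auto. Qed.

Lemma chain_tele prev L u : chainF prev L u -> g u - g prev <= sumL (fun x => g (snd (fst x)) - g (fst (fst x))) L.
Proof. revert prev; induction L as [|[[c d] j] L IH]; simpl; intros prev H.
  - lra.
  - destruct H as (H1 & H2 & H3 & H4 & H5 & H6). specialize (IH d H6). lra. Qed.

Lemma chain_sorted prev L u : chainF prev L u -> forall x0 j j', (j < j')%nat -> (j' < length L)%nat ->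
  snd (fst (nth j L x0)) <= fst (fst (nth j' L x0)).
Proof. revert prev; induction L as [|[[c d] k] L IH]; simpl; intros prev H x0 j j' Hj Hj'; [lia|].
  destruct H as (H1 & H2 & H3 & H4 & H5 & H6).
  destruct j as [|j]; destruct j' as [|j']; try lia.
  - simpl. apply (chain_bounds d L u H6). apply nth_In. lia.
  - apply (IH d H6); lia. Qed.

End Chain.

Lemma idx_app L L2 : idx (L ++ L2) = idx L ++ idx L2.
Proof. unfold idx; apply map_app. Qed.

Lemma NoDup_incl_sub (L2 L : list (R*R*nat)) : NoDup (idx L2) -> True.
Proof. auto. Qed.


Lemma chain_elem g cc dd prev L u : chainF g cc dd prev L u -> forall x, In x L ->
  cc (snd x) < fst (fst x) /\ snd (fst x) < dd (snd x).
Proof. revert prev; induction L as [|[[c d] j] L IH]; simpl; intros prev H x Hx; [tauto|].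
  destruct H as (H1 & H2 & H3 & H4 & H5 & H6). destruct Hx as [<-|Hx]; simpl; auto.
  apply (IH d H6 x Hx). Qed.

Lemma sumL_idx (L : list (R*R*nat)) f h : (forall x, In x L -> f x <= h (snd x)) ->
  sumL f L <= fold_right (fun j acc => h j + acc) 0 (idx L).
Proof. induction L as [|x L IH]; simpl; intros H; [lra|].
  pose proof (H x (or_introl eq_refl)). assert (sumL f L <= fold_right (fun j acc => h j + acc) 0 (idx L)) by (apply IH; auto). lra. Qed.

Lemma sumL_le (L : list (R*R*nat)) f h : (forall x, In x L -> f x <= h x) -> sumL f L <= sumL h L.
Proof. induction L as [|x L IH]; simpl; intros H; [lra|].
  pose proof (H x (or_introl eq_refl)). assert (sumL f L <= sumL h L) by (apply IH; auto). lra. Qed.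

Lemma le_fold_max (l : list nat) j : In j l -> (j <= fold_right max 0 l)%nat.
Proof. induction l as [|x l IH]; simpl; [tauto|]. intros [<-|H]; [lia|]. specialize (IH H). lia. Qed.

Lemma Rmax_spec x y : (y <= x /\ Rmax x y = x) \/ (x < y /\ Rmax x y = y).
Proof. unfold Rmax; destruct (Rle_dec x y) as [H|H]; [destruct (Req_dec x y)|]; [left|right|left]; split; auto; lra. Qed.

Lemma ML (g : R -> R) a b (E : R -> Prop) : a <= b -> abs_continuous_on a b g -> null_set E ->
  (forall x, a <= x <= b -> ~ E x -> exists eta, 0 < eta /\ forall h, 0 < h < eta -> g (x + h) <= g x /\ (a <= x - h -> g x <= g (x - h))) ->
  g b <= g a.
Proof. intros Hab HAC Hnull Hgood.
  assert (Heps: forall eps, 0 < eps -> g b <= g a + eps).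
  2:{ apply Rnot_lt_le; intros Hlt. specialize (Heps ((g b - g a) / 2) ltac:(lra)). lra. }
  intros eps He. destruct (HAC eps He) as [delta [Hd HACd]].
  destruct (Hnull delta Hd) as [cc [dd [Hcd [Hcov Hsum]]]].
  set (Q := fun u => exists L, chainF g cc dd a L u /\ NoDup (idx L)).
  assert (Qb: Q b).
  { apply (real_ind a b Q); auto.
    - exists nil. simpl. split; [lra| constructor].
    - intros u Hu [L [HL Hnd]]. destruct (classic (E u)) as [Eu|nEu].
      + destruct (Hcov u Eu) as [j [Hj1 Hj2]]. exists (dd j - u). split; [lra|]. intros v Hv Hvb.
        destruct (in_dec Nat.eq_dec j (idx L)) as [Hin|Hin].
        * destruct (chain_merge g cc dd a L u v j HL Hin ltac:(lra) ltac:(lra)) as [L2 [rest [HL2 Hi]]].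
          exists L2. split; auto. rewrite Hi in Hnd. eapply NoDup_app_remove_r; eauto.
        * exists (L ++ ((u, v), j) :: nil). split.
          -- apply (chain_app g cc dd a L u). auto. simpl. repeat split; lra.
          -- rewrite idx_app. simpl. apply NoDup_snoc; auto.
      + destruct (Hgood u ltac:(lra) nEu) as [eta [Heta Hg]]. exists eta. split; auto. intros v Hv Hvb.
        exists L. split; auto. apply (chain_extend g cc dd a L u); [auto|lra|].
        destruct (Hg (v - u) ltac:(lra)) as [Hg1 _]. replace (u + (v - u)) with v in Hg1 by ring. auto.
    - intros u Hu IH. destruct (classic (E u)) as [Eu|nEu].
      + destruct (Hcov u Eu) as [j [Hj1 Hj2]]. set (v := (Rmax a (cc j) + u) / 2).
        assert (Hv: a <= v < u /\ cc j < v) by (unfold v; destruct (Rmax_spec a (cc j)) as [[? ->]|[? ->]]; lra).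
        destruct (IH v ltac:(lra)) as [L [HL Hnd]].
        destruct (in_dec Nat.eq_dec j (idx L)) as [Hin|Hin].
        * destruct (chain_merge g cc dd a L v u j HL Hin ltac:(lra) ltac:(lra)) as [L2 [rest [HL2 Hi]]].
          exists L2. split; auto. rewrite Hi in Hnd. eapply NoDup_app_remove_r; eauto.
        * exists (L ++ ((v, u), j) :: nil). split.
          -- apply (chain_app g cc dd a L v). auto. simpl. repeat split; lra.
          -- rewrite idx_app. simpl. apply NoDup_snoc; auto.
      + destruct (Hgood u ltac:(lra) nEu) as [eta [Heta Hg]].
        set (h := Rmin (eta / 2) (u - a)).
        assert (Hh: 0 < h < eta /\ h <= u - a) by (unfold h; destruct (Rmin_spec (eta/2) (u - a)) as [[? ->]|[? ->]]; lra).
        destruct (IH (u - h) ltac:(lra)) as [L [HL Hnd]].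
        exists L. split; auto. apply (chain_extend g cc dd a L (u - h)); [auto|lra|].
        apply (Hg h); lra. }
  destruct Qb as [L [HL Hnd]].
  pose proof (chain_tele g cc dd a L b HL) as Htele.
  set (x0 := ((0, 0), 0%nat) : R * R * nat).
  set (N := length L).
  set (c := fun j => fst (fst (nth j L x0))). set (d := fun j => snd (fst (nth j L x0))).
  assert (Hlen: rsum N (fun j => d j - c j) < delta).
  { unfold N, c, d. rewrite (rsum_nth L (fun x => snd (fst x) - fst (fst x)) x0).
    eapply Rle_lt_trans.
    - apply (sumL_idx L _ (fun j => dd j - cc j)). intros x Hx. pose proof (chain_elem g cc dd a L b HL x Hx). lra.
    - eapply Rle_lt_trans; [|apply (Hsum (S (fold_right max 0%nat (idx L))))].
      apply sum_nodup; auto.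
      + intros j Hj. apply le_fold_max in Hj. lia.
      + intros j. specialize (Hcd j). lra. }
  assert (HAC2: rsum N (fun j => Rabs (g (d j) - g (c j))) < eps).
  { apply HACd; auto.
    - intros j Hj. unfold c, d. apply (chain_bounds g cc dd a L b HL). apply nth_In; auto.
    - intros j j' Hj Hj'. unfold c, d. apply (chain_sorted g cc dd a L b HL); auto. }
  unfold N, c, d in HAC2. rewrite (rsum_nth L (fun x => Rabs (g (snd (fst x)) - g (fst (fst x)))) x0) in HAC2.
  assert (sumL (fun x => g (snd (fst x)) - g (fst (fst x))) L <= sumL (fun x => Rabs (g (snd (fst x)) - g (fst (fst x)))) L)
    by (apply sumL_le; intros; apply Rle_abs).
  lra. Qed.


Lemma ML0 (g : R -> R) a b : a <= b ->
  (forall x, a <= x <= b -> exists eta, 0 < eta /\ forall h, 0 < h < eta -> g (x + h) <= g x /\ (a <= x - h -> g x <= g (x - h))) ->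
  g b <= g a.
Proof. intros Hab Hgood. apply (real_ind a b (fun u => g u <= g a)); auto; [lra| |].
  - intros u Hu Hq. destruct (Hgood u ltac:(lra)) as [eta [He Hg]]. exists eta; split; auto.
    intros v Hv _. destruct (Hg (v - u) ltac:(lra)) as [H1 _]. replace (u + (v - u)) with v in H1 by ring. lra.
  - intros u Hu IH. destruct (Hgood u ltac:(lra)) as [eta [He Hg]].
    set (h := Rmin (eta / 2) (u - a)).
    assert (Hh: 0 < h < eta /\ h <= u - a) by (unfold h; destruct (Rmin_spec (eta/2) (u - a)) as [[? ->]|[? ->]]; lra).
    destruct (Hg h ltac:(lra)) as [_ H2]. specialize (H2 ltac:(lra)). specialize (IH (u - h) ltac:(lra)). lra. Qed.

Lemma deriv_neg_local f x l : derivable_pt_lim f x l -> l < 0 ->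
  exists eta, 0 < eta /\ forall h, 0 < h < eta -> f (x + h) < f x /\ f x < f (x - h).
Proof. intros Hd Hl. destruct (Hd (- l / 2) ltac:(lra)) as [[eta He] Heta]. simpl in Heta.
  exists eta. split; auto. intros h Hh. split.
  - specialize (Heta h ltac:(lra) ltac:(rewrite Rabs_right; lra)).
    apply Rabs_def2 in Heta. destruct Heta as [H1 H2].
    assert ((f (x + h) - f x) / h < 0) by lra.
    assert (f (x + h) - f x < 0); [|lra].
    replace (f (x + h) - f x) with ((f (x + h) - f x) / h * h) by (field; lra). nra.
  - specialize (Heta (- h) ltac:(lra) ltac:(rewrite Rabs_left; lra)).
    apply Rabs_def2 in Heta. destruct Heta as [H1 H2].
    replace (x + - h) with (x - h) in H1 by ring.
    assert ((f (x - h) - f x) / - h < 0) by lra.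
    assert (f (x - h) - f x > 0); [|lra].
    replace (f (x - h) - f x) with (- ((f (x - h) - f x) / - h * h)) by (field; lra). nra. Qed.

Lemma rsum_const n c : rsum n (fun _ => c) = INR n * c.
Proof. induction n; simpl rsum; [simpl; ring|]. rewrite IHn, S_INR. ring. Qed.

Lemma AC_lip g a b L : (forall x y, a <= x <= b -> a <= y <= b -> Rabs (g x - g y) <= L * Rabs (x - y)) ->
  abs_continuous_on a b g.
Proof. intros H eps He. set (K := Rabs L + 1). assert (HK: 0 < K) by (unfold K; pose proof (Rabs_pos L); lra).
  exists (eps / K). split; [apply Rdiv_lt_0_compat; auto|].
  intros N c d Hcd Hord Hs.
  apply Rle_lt_trans with (K * rsum N (fun j => d j - c j)).
  - rewrite <- rsum_scal. apply rsum_le; intros j Hj. specialize (Hcd j Hj).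
    eapply Rle_trans; [apply H; lra|]. rewrite Rabs_right by lra.
    assert (L <= K) by (unfold K; pose proof (Rle_abs L); lra). nra.
  - apply (Rmult_lt_compat_l K) in Hs; auto. replace (K * (eps / K)) with eps in Hs by (field; lra). auto. Qed.

Lemma AC_sub f h a b : abs_continuous_on a b f -> abs_continuous_on a b h ->
  abs_continuous_on a b (fun t => f t - h t).
Proof. intros Hf Hh eps He. destruct (Hf (eps/2) ltac:(lra)) as [d1 [Hd1 H1]]. destruct (Hh (eps/2) ltac:(lra)) as [d2 [Hd2 H2]].
  exists (Rmin d1 d2). split; [destruct (Rmin_spec d1 d2) as [[? ->]|[? ->]]; lra|].
  intros N c d Hcd Hord Hs.
  assert (rsum N (fun j => d j - c j) < d1) by (destruct (Rmin_spec d1 d2) as [[? E]|[? E]]; rewrite E in Hs; lra).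
  assert (rsum N (fun j => d j - c j) < d2) by (destruct (Rmin_spec d1 d2) as [[? E]|[? E]]; rewrite E in Hs; lra).
  specialize (H1 N c d Hcd Hord H). specialize (H2 N c d Hcd Hord H0).
  eapply Rle_lt_trans with (rsum N (fun j => Rabs (f (d j) - f (c j))) + rsum N (fun j => Rabs (h (d j) - h (c j)))); [|lra].
  rewrite <- rsum_plus. apply rsum_le; intros. cbv beta.
  replace (f (d i) - h (d i) - (f (c i) - h (c i))) with ((f (d i) - f (c i)) + - (h (d i) - h (c i))) by ring.
  eapply Rle_trans; [apply Rabs_triang|]. rewrite Rabs_Ropp. lra. Qed.

Lemma common_delta1 (P : nat -> R -> Prop) m :
  (forall k d d', (k<m)%nat -> 0 < d' <= d -> P k d -> P k d') ->
  (forall k, (k<m)%nat -> exists d, 0 < d /\ P k d) ->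
  exists d, 0 < d /\ forall k, (k<m)%nat -> P k d.
Proof. intros Hmono Hex. induction m as [|m IH].
  - exists 1; split; [lra| intros; lia].
  - destruct IH as [d1 [Hd1 H1]]. { intros; eapply Hmono; eauto; lia. } { intros; apply Hex; lia. }
    destruct (Hex m ltac:(lia)) as [d2 [Hd2 H2]].
    exists (Rmin d1 d2). split; [destruct (Rmin_spec d1 d2) as [[? ->]|[? ->]]; lra|].
    intros k Hk. destruct (Nat.eq_dec k m) as [->|Hne].
    + apply (Hmono m d2); auto. destruct (Rmin_spec d1 d2) as [[? ->]|[? ->]]; lra.
    + apply (Hmono k d1); [lia| |apply H1; lia]. destruct (Rmin_spec d1 d2) as [[? ->]|[? ->]]; lra. Qed.

Lemma common_delta (P : nat -> nat -> R -> Prop) n m :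
  (forall i k d d', (i<n)%nat -> (k<m)%nat -> 0 < d' <= d -> P i k d -> P i k d') ->
  (forall i k, (i<n)%nat -> (k<m)%nat -> exists d, 0 < d /\ P i k d) ->
  exists d, 0 < d /\ forall i k, (i<n)%nat -> (k<m)%nat -> P i k d.
Proof. intros Hmono Hex.
  destruct (common_delta1 (fun i d => forall k, (k<m)%nat -> P i k d) n) as [d0 [Hd0 H0]].
  - intros i d d' Hi Hd H k Hk. apply (Hmono i k d d'); auto.
  - intros i Hi. apply (common_delta1 (P i) m).
    + intros; eapply Hmono; eauto.
    + intros; apply Hex; auto.
  - exists d0; split; auto. Qed.

Lemma AC_comb (g : R -> R) (f : nat -> nat -> R -> R) n m a b K : 0 <= K ->
  (forall i k, (i<n)%nat -> (k<m)%nat -> abs_continuous_on a b (f i k)) ->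
  (forall x y, a <= x <= b -> a <= y <= b ->
     Rabs (g x - g y) <= K * rsum n (fun i => rsum m (fun k => Rabs (f i k x - f i k y)))) ->
  abs_continuous_on a b g.
Proof. intros HK Hf Hg eps He.
  set (e' := eps / (K * INR n * INR m + 1)).
  assert (Hden: 0 < K * INR n * INR m + 1) by (pose proof (pos_INR n); pose proof (pos_INR m);
    assert (0 <= K * INR n) by nra; nra).
  assert (He': 0 < e') by (unfold e'; apply Rdiv_lt_0_compat; auto).
  destruct (common_delta (fun i k d => forall N c dd, (forall j, (j < N)%nat -> a <= c j /\ c j <= dd j <= b) ->
      (forall j j', (j < j')%nat -> (j' < N)%nat -> dd j <= c j') -> rsum N (fun j => dd j - c j) < d ->
      rsum N (fun j => Rabs (f i k (dd j) - f i k (c j))) < e') n m) as [delta [Hd Hdel]].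
  - intros i k d d' Hi Hk Hdd H N c dd H1 H2 H3. apply H; auto. lra.
  - intros i k Hi Hk. apply (Hf i k Hi Hk e' He').
  - exists delta. split; auto. intros N c dd Hcd Hord Hs.
    apply Rle_lt_trans with (K * rsum n (fun i => rsum m (fun k => rsum N (fun j => Rabs (f i k (dd j) - f i k (c j)))))).
    + transitivity (rsum N (fun j => K * rsum n (fun i => rsum m (fun k => Rabs (f i k (dd j) - f i k (c j)))))).
      * apply rsum_le; intros j Hj. specialize (Hcd j Hj). apply Hg; lra.
      * rewrite rsum_scal. right. f_equal. rewrite <- rsum_swap. apply rsum_ext; intros. rewrite <- rsum_swap. auto.
    + apply Rle_lt_trans with (K * rsum n (fun i => rsum m (fun k => e'))).
      * apply Rmult_le_compat_l; auto. apply rsum_le; intros; apply rsum_le; intros. left. apply Hdel; auto.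
      * rewrite (rsum_ext n _ (fun _ => INR m * e')) by (intros; apply rsum_const). rewrite rsum_const.
        unfold e'. replace (K * (INR n * (INR m * (eps / (K * INR n * INR m + 1))))) with
          (eps * ((K * INR n * INR m) / (K * INR n * INR m + 1))) by (field; lra).
        assert ((K * INR n * INR m) / (K * INR n * INR m + 1) < 1).
        { apply (Rmult_lt_reg_r (K * INR n * INR m + 1)); auto. unfold Rdiv. rewrite Rmult_assoc, Rinv_l by lra. lra. }
        nra. Qed.

Lemma AC_bounded g a b : a <= b -> abs_continuous_on a b g -> exists B, forall x, a <= x <= b -> Rabs (g x) <= B.
Proof. intros Hab Hac. destruct (Hac 1 ltac:(lra)) as [delta [Hd H]].
  assert (Hstep: forall x y, a <= y <= x -> x <= b -> x - y < delta -> Rabs (g x - g y) < 1).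
  { intros x y Hy Hx Hxy. specialize (H 1%nat (fun _ => y) (fun _ => x)). simpl in H.
    rewrite !Rplus_0_l in H. apply H.
    - intros; lra.
    - intros; lia.
    - lra. }
  assert (Hk: forall k : nat, forall x, a <= x <= b -> x <= a + INR k * (delta / 2) -> Rabs (g x - g a) <= INR k).
  { induction k as [|k IH]; intros x Hx Hxk.
    - simpl in *. replace x with a by lra. rewrite Rminus_diag, Rabs_R0. lra.
    - rewrite S_INR in *. destruct (Rle_or_lt x (a + INR k * (delta / 2))) as [Hle|Hlt].
      + specialize (IH x Hx Hle). lra.
      + set (y := a + INR k * (delta / 2)) in *. assert (a <= y) by (unfold y; pose proof (pos_INR k); nra).
        specialize (IH y ltac:(lra) ltac:(unfold y; lra)).
        specialize (Hstep x y ltac:(lra) ltac:(lra) ltac:(unfold y in *; lra)).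
        replace (g x - g a) with ((g x - g y) + (g y - g a)) by ring.
        eapply Rle_trans; [apply Rabs_triang|]. lra. }
  destruct (archimed_cor1 (delta / (2 * (b - a + 1))) ltac:(apply Rdiv_lt_0_compat; lra)) as [K [HK HK0]].
  assert (HKpos: 0 < INR K) by (apply lt_0_INR; auto).
  assert (HK2: b - a <= INR K * (delta / 2)).
  { apply (Rmult_lt_compat_l (INR K)) in HK; auto. rewrite Rinv_r in HK by lra.
    assert (1 * (2 * (b - a + 1)) < INR K * (delta / (2 * (b - a + 1))) * (2 * (b - a + 1))).
    { apply Rmult_lt_compat_r; lra. }
    replace (INR K * (delta / (2 * (b - a + 1))) * (2 * (b - a + 1))) with (INR K * delta) in H0 by (field; lra). lra. }
  exists (Rabs (g a) + INR K). intros x Hx. specialize (Hk K x Hx ltac:(lra)).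
  replace (g x) with ((g x - g a) + g a) by ring. eapply Rle_trans; [apply Rabs_triang|]. lra. Qed.


Lemma within_to_lim t0 f t d : t0 < t -> deriv_within_from t0 f t d -> derivable_pt_lim f t d.
Proof. intros Ht H eps He. destruct (H eps He) as [del [Hd Hdel]].
  assert (Hm: 0 < Rmin del (t - t0)) by (destruct (Rmin_spec del (t - t0)) as [[? ->]|[? ->]]; lra).
  exists (mkposreal _ Hm). simpl. intros h Hh Hh2. apply Hdel; auto.
  - destruct (Rmin_spec del (t - t0)) as [[? E]|[? E]]; rewrite E in Hh2; lra.
  - destruct (Rmin_spec del (t - t0)) as [[? E]|[? E]]; rewrite E in Hh2; apply Rabs_def2 in Hh2; lra. Qed.

Lemma within_upper t0 f s d c : t0 <= s -> deriv_within_from t0 f s d -> d < c ->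
  exists eta, 0 < eta /\ forall h, 0 < h < eta ->
    f (s + h) - c * (s + h) <= f s - c * s /\ (t0 <= s - h -> f s - c * s <= f (s - h) - c * (s - h)).
Proof. intros Hs H Hdc. destruct (H ((c - d)/2) ltac:(lra)) as [del [Hd Hdel]].
  exists del. split; auto. intros h Hh. split.
  - specialize (Hdel h ltac:(lra) ltac:(rewrite Rabs_right; lra) ltac:(lra)).
    apply Rabs_def2 in Hdel. destruct Hdel as [H1 _].
    assert (Hq: (f (s + h) - f s) / h < c) by lra.
    assert (f (s + h) - f s < c * h); [|lra].
    replace (f (s + h) - f s) with ((f (s + h) - f s) / h * h) by (field; lra). nra.
  - intros Hsh. specialize (Hdel (- h) ltac:(lra) ltac:(rewrite Rabs_left; lra) ltac:(lra)).
    apply Rabs_def2 in Hdel. destruct Hdel as [H1 _]. replace (s + - h) with (s - h) in H1 by ring.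
    assert (Hq: (f (s - h) - f s) / - h < c) by lra.
    assert (f s - f (s - h) < c * h); [|lra].
    replace (f s - f (s - h)) with ((f (s - h) - f s) / - h * h) by (field; lra). nra. Qed.

Lemma within_opp t0 f s d : deriv_within_from t0 f s d -> deriv_within_from t0 (fun x => - f x) s (- d).
Proof. intros H eps He. destruct (H eps He) as [del [Hd Hdel]]. exists del; split; auto.
  intros h Hh1 Hh2 Hh3. specialize (Hdel h Hh1 Hh2 Hh3).
  replace ((- f (s + h) - - f s) / h - - d) with (- ((f (s + h) - f s) / h - d)) by (field; auto).
  rewrite Rabs_Ropp; auto. Qed.

Lemma one_side t0 f df S : (forall s, t0 <= s -> deriv_within_from t0 f s (df s)) ->
  (forall s, t0 <= s -> df s <= S) -> forall x y, t0 <= x <= y -> f y - f x <= S * (y - x).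
Proof. intros Hd Hb x y Hxy.
  assert (H: forall eps, 0 < eps -> f y - f x <= (S + eps) * (y - x)).
  { intros eps He. set (g := fun s => f s - (S + eps) * s).
    assert (g y <= g x).
    { apply ML0; [lra|]. intros s Hs. destruct (within_upper t0 f s (df s) (S + eps)) as [eta [Heta Hg]].
      - lra.
      - apply Hd; lra.
      - specialize (Hb s ltac:(lra)); lra.
      - exists eta; split; auto. intros h Hh. destruct (Hg h Hh) as [H1 H2]. unfold g. split; auto.
        intros; apply H2; lra. }
    unfold g in H. lra. }
  apply Rnot_lt_le. intros Hlt. assert (Hyx: 0 < y - x).
  { destruct (Req_dec y x) as [E|E]; [subst; lra| lra]. }
  specialize (H ((f y - f x - S * (y - x)) / (2 * (y - x))) ltac:(apply Rdiv_lt_0_compat; lra)).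
  replace ((S + (f y - f x - S * (y - x)) / (2 * (y - x))) * (y - x)) with (S * (y - x) + (f y - f x - S * (y - x)) / 2) in H by (field; lra).
  lra. Qed.

Lemma Lip_from_deriv t0 f df S : (forall s, t0 <= s -> deriv_within_from t0 f s (df s)) ->
  (forall s, t0 <= s -> Rabs (df s) <= S) -> forall x y, t0 <= x -> t0 <= y -> Rabs (f x - f y) <= S * Rabs (x - y).
Proof. intros Hd Hb.
  assert (K: forall x y, t0 <= x <= y -> Rabs (f y - f x) <= S * (y - x)).
  { intros x y Hxy. apply Rabs_le. split.
    - assert (- f y - - f x <= S * (y - x)); [|lra].
      apply (one_side t0 (fun z => - f z) (fun z => - df z) S); auto.
      + intros; apply within_opp; auto.
      + intros s Hs; specialize (Hb s Hs). pose proof (Rle_abs (- df s)) as Ha. rewrite Rabs_Ropp in Ha. lra.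
    - apply (one_side t0 f df S); auto. intros s Hs; specialize (Hb s Hs). pose proof (Rle_abs (df s)); lra. }
  intros x y Hx Hy. destruct (Rle_or_lt x y).
  - rewrite Rabs_minus_sym. rewrite (Rabs_left1 (x - y)) by lra. replace (- (x - y)) with (y - x) by ring. apply K; lra.
  - rewrite (Rabs_right (x - y)) by lra. apply K; lra. Qed.

Lemma null_add_point (E : R -> Prop) t0 : null_set E -> null_set (fun x => E x \/ x = t0).
Proof. intros H eps He. destruct (H (eps / 2) ltac:(lra)) as [c [d [Hcd [Hcov Hs]]]].
  exists (fun j => match j with O => t0 - eps / 8 | S j' => c j' end).
  exists (fun j => match j with O => t0 + eps / 8 | S j' => d j' end).
  split; [|split].
  - intros [|j]; [lra| apply Hcd].
  - intros t [Et| ->].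
    + destruct (Hcov t Et) as [j Hj]. exists (S j); auto.
    + exists O; lra.
  - intros [|N].
    + simpl; lra.
    + rewrite rsum_shift. specialize (Hs N). lra. Qed.

Lemma sqrt_lip a b dl : 0 < dl -> dl <= a -> dl <= b -> Rabs (sqrt a - sqrt b) <= / (2 * sqrt dl) * Rabs (a - b).
Proof. intros Hd Ha Hb.
  assert (Hsa: sqrt dl <= sqrt a) by (apply sqrt_le_1_alt; lra).
  assert (Hsb: sqrt dl <= sqrt b) by (apply sqrt_le_1_alt; lra).
  assert (Hs0: 0 < sqrt dl) by (apply sqrt_lt_R0; lra).
  assert (E: a - b = (sqrt a - sqrt b) * (sqrt a + sqrt b)).
  { replace ((sqrt a - sqrt b) * (sqrt a + sqrt b)) with (sqrt a * sqrt a - sqrt b * sqrt b) by ring.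
    rewrite !sqrt_sqrt; lra. }
  rewrite E, Rabs_mult. rewrite (Rabs_right (sqrt a + sqrt b)) by lra.
  pose proof (Rabs_pos (sqrt a - sqrt b)).
  assert (HH: Rabs (sqrt a - sqrt b) * (2 * sqrt dl) <= Rabs (sqrt a - sqrt b) * (sqrt a + sqrt b)) by nra.
  apply (Rmult_le_reg_r (2 * sqrt dl)); [lra|].
  replace (/ (2 * sqrt dl) * (Rabs (sqrt a - sqrt b) * (sqrt a + sqrt b)) * (2 * sqrt dl)) with
    (Rabs (sqrt a - sqrt b) * (sqrt a + sqrt b)) by (field; lra). lra. Qed.

Lemma dlim_rsum n (f : nat -> R -> R) df t : (forall i, (i < n)%nat -> derivable_pt_lim (f i) t (df i)) ->
  derivable_pt_lim (fun s => rsum n (fun i => f i s)) t (rsum n df).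
Proof. induction n; intros H; simpl.
  - apply (derivable_pt_lim_const 0).
  - apply (derivable_pt_lim_plus (fun s => rsum n (fun i => f i s)) (f n)); [apply IHn; intros; apply H; lia| apply H; lia]. Qed.

Lemma dlim_mult f g t l1 l2 : derivable_pt_lim f t l1 -> derivable_pt_lim g t l2 ->
  derivable_pt_lim (fun s => f s * g s) t (l1 * g t + f t * l2).
Proof. intros; apply (derivable_pt_lim_mult f g); auto. Qed.

Lemma dlim_ext f g t l l' : (forall s, f s = g s) -> l = l' -> derivable_pt_lim f t l -> derivable_pt_lim g t l'.
Proof. intros E <- H eps He. destruct (H eps He) as [del Hd]. exists del. intros h H1 H2. rewrite <- !E. auto. Qed.



Lemma dlim_const_mult c f t l : derivable_pt_lim f t l -> derivable_pt_lim (fun s => c * f s) t (c * l).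
Proof. intros H. exact (derivable_pt_lim_scal f c t l H). Qed.

Lemma dlim_minus f g t l1 l2 : derivable_pt_lim f t l1 -> derivable_pt_lim g t l2 ->
  derivable_pt_lim (fun s => f s - g s) t (l1 - l2).
Proof. intros; apply (derivable_pt_lim_minus f g); auto. Qed.

Lemma dlim_Mvec n m w p (F : nat -> nat -> R -> R) (dF : nat -> nat -> R) s :
  (forall j l, (j<n)%nat -> (l<m)%nat -> derivable_pt_lim (F j l) s (dF j l)) ->
  forall i k, derivable_pt_lim (fun x => Mvec n m w p (fun j l => F j l x) i k) s (Mvec n m w p dF i k).
Proof. intros H i k. unfold Mvec. apply dlim_rsum; intros j Hj. apply dlim_rsum; intros l Hl.
  apply dlim_const_mult. auto. Qed.

Lemma dlim_Mquad n m w p (F : nat -> nat -> R -> R) (dF : nat -> nat -> R) s :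
  (forall j l, (j<n)%nat -> (l<m)%nat -> derivable_pt_lim (F j l) s (dF j l)) ->
  derivable_pt_lim (fun x => Mquad n m w p (fun j l => F j l x)) s
    (dotv n m dF (Mvec n m w p (fun j l => F j l s)) + dotv n m (fun j l => F j l s) (Mvec n m w p dF)).
Proof. intros H. unfold dotv. rewrite <- rsum_plus.
  eapply (dlim_ext (fun x => rsum n (fun i => rsum m (fun k => F i k x * Mvec n m w p (fun j l => F j l x) i k)))).
  3:{ apply dlim_rsum; intros i Hi. apply dlim_rsum; intros k Hk. apply dlim_mult; auto. apply dlim_Mvec; auto. }
  - intros; unfold Mquad; auto.
  - apply rsum_ext; intros. rewrite <- rsum_plus. auto.
  Qed.

Lemma Mvec_add n m w p u v i k : Mvec n m w p (fun j l => u j l + v j l) i k = Mvec n m w p u i k + Mvec n m w p v i k.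
Proof. unfold Mvec. rewrite <- rsum_plus. apply rsum_ext; intros.
  rewrite <- rsum_plus. apply rsum_ext; intros. ring. Qed.

Lemma Q_diff n m w p u v : (forall i j, (i<n)%nat -> (j<n)%nat -> w i j = w j i) ->
  Mquad n m w p u - Mquad n m w p v = dotv n m (fun i k => u i k - v i k) (Mvec n m w p (fun i k => u i k + v i k)).
Proof. intros Hs. pose proof (Mquad_sym n m w p Hs u v) as Sy.
  change (Mquad n m w p u) with (dotv n m u (Mvec n m w p u)). change (Mquad n m w p v) with (dotv n m v (Mvec n m w p v)).
  transitivity (dotv n m u (Mvec n m w p u) + dotv n m u (Mvec n m w p v) - dotv n m v (Mvec n m w p u) - dotv n m v (Mvec n m w p v)).
  - rewrite Sy. ring.
  - unfold dotv. rewrite <- !rsum_plus, <- !rsum_minus. apply rsum_ext; intros.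
    rewrite <- !rsum_plus, <- !rsum_minus. apply rsum_ext; intros. rewrite Mvec_add. ring. Qed.

Lemma dotv_abs_bound n m u v C : (forall i k, (i<n)%nat -> (k<m)%nat -> Rabs (v i k) <= C) ->
  Rabs (dotv n m u v) <= C * rsum n (fun i => rsum m (fun k => Rabs (u i k))).
Proof. intros H. unfold dotv. eapply Rle_trans; [apply rsum_abs|]. rewrite <- rsum_scal. apply rsum_le; intros i Hi.
  eapply Rle_trans; [apply rsum_abs|]. rewrite <- rsum_scal. apply rsum_le; intros k Hk.
  rewrite Rabs_mult. specialize (H i k Hi Hk). pose proof (Rabs_pos (u i k)). pose proof (Rabs_pos (v i k)). nra. Qed.

Lemma Mvec_abs_bound n m w p v B i k : (i<n)%nat -> (k<m)%nat -> 0 <= B ->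
  (forall j l, (j<n)%nat -> (l<m)%nat -> Rabs (v j l) <= B) -> Rabs (Mvec n m w p v i k) <= B * Kb n m w p.
Proof. intros Hi Hk HB H. unfold Mvec, Kb.
  apply Rle_trans with (B * rsum n (fun j => rsum m (fun l => Rabs (Mmat n m w p i k j l)))).
  - eapply Rle_trans; [apply rsum_abs|]. rewrite <- rsum_scal. apply rsum_le; intros j Hj.
    eapply Rle_trans; [apply rsum_abs|]. rewrite <- rsum_scal. apply rsum_le; intros l Hl.
    rewrite Rabs_mult. specialize (H j l Hj Hl). pose proof (Rabs_pos (Mmat n m w p i k j l)). pose proof (Rabs_pos (v j l)). nra.
  - apply Rmult_le_compat_l; auto.
    apply Rle_trans with (rsum m (fun k' => rsum n (fun j => rsum m (fun l => Rabs (Mmat n m w p i k' j l))))).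
    + apply (rsum_term_le m (fun k' => rsum n (fun j => rsum m (fun l => Rabs (Mmat n m w p i k' j l)))) k); auto.
      intros; apply rsum_nonneg; intros; apply rsum_nonneg; intros; apply Rabs_pos.
    + apply (rsum_term_le n (fun i' => rsum m (fun k' => rsum n (fun j => rsum m (fun l => Rabs (Mmat n m w p i' k' j l))))) i); auto.
      intros; repeat (apply rsum_nonneg; intros); apply Rabs_pos. Qed.


Section Main.
Variables (n m : nat) (w : nat -> nat -> R) (p : nat -> R)
  (t0 beta : R) (a0 da0 : nat -> R -> R) (a : nat -> nat -> R -> R)
  (lmin lmax S : R) (Nul : R -> Prop).
Hypothesis Hgraph : graph_ok n w p.
Hypothesis HA1 : assumption_A1 n w p.
Hypothesis Ha0 : C1_from t0 m a0 da0.
Hypothesis Hbeta : 0 < beta.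
Hypothesis Hsup : is_lub (fun x => exists t, t0 <= t /\ x = norm2 m (fun k => da0 k t)) S.
Hypothesis HA2 : S < beta.
Hypothesis Hlmin : is_lambda_min n m w p lmin.
Hypothesis Hlmax : is_lambda_max n m w p lmax.
Hypothesis Hac : forall i k T, (i < n)%nat -> (k < m)%nat -> t0 <= T -> abs_continuous_on t0 T (a i k).
Hypothesis HNul : null_set Nul.
Hypothesis HF : forall t, t0 < t -> ~ Nul t ->
      forall i k, (i < n)%nat -> (k < m)%nat ->
        exists dd u, derivable_pt_lim (a i k) t dd /\
          in_SGN (sliding_var n w p a a0 i k t) u /\ dd = - beta * u.

Definition abar t := fun i k => a i k t - a0 k t.
Definition V t := / 2 * Mquad n m w p (abar t).

Lemma Hsym : forall i j, (i < n)%nat -> (j < n)%nat -> w i j = w j i.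
Proof. apply Hgraph. Qed.
Lemma Hdiag : forall i, (i < n)%nat -> w i i = 0.
Proof. apply Hgraph. Qed.

Lemma lmin_gt0 : 0 < lmin.
Proof. apply (lmin_pos n m w p); auto. Qed.

Lemma lmax_ge : lmin <= lmax.
Proof. apply Hlmax. apply Hlmin. Qed.

Lemma S_nonneg : 0 <= S.
Proof. destruct Hsup as [H _]. eapply Rle_trans; [|apply H; exists t0; split; [lra|reflexivity]]. apply sqrt_pos. Qed.

Lemma da_norm s : t0 <= s -> norm2 m (fun k => da0 k s) <= S.
Proof. intros Hs. apply Hsup. exists s; auto. Qed.

Lemma da_bound s k : t0 <= s -> (k < m)%nat -> Rabs (da0 k s) <= S.
Proof. intros Hs Hk. eapply Rle_trans; [|apply (da_norm s Hs)]. unfold norm2. rewrite <- sqrt_Rsqr_abs.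
  apply sqrt_le_1_alt. unfold Rsqr. apply (rsum_term_le m (fun k => da0 k s * da0 k s) k); auto.
  intros; exact (Rle_0_sqr _). Qed.

Lemma a0_lip k : (k < m)%nat -> forall x y, t0 <= x -> t0 <= y -> Rabs (a0 k x - a0 k y) <= S * Rabs (x - y).
Proof. intros Hk. apply (Lip_from_deriv t0 (a0 k) (da0 k) S).
  - intros; apply (Ha0 k Hk); auto.
  - intros; apply da_bound; auto. Qed.

Lemma abar_AC i k T : (i < n)%nat -> (k < m)%nat -> t0 <= T -> abs_continuous_on t0 T (fun t => abar t i k).
Proof. intros Hi Hk HT. unfold abar. apply AC_sub; auto. apply (AC_lip _ _ _ S). intros x y Hx Hy; apply a0_lip; [exact Hk|lra|lra]. Qed.

Lemma V_AC T : t0 <= T -> abs_continuous_on t0 T V.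
Proof. intros HT.
  destruct (common_delta (fun i k d => forall x, t0 <= x <= T -> Rabs (abar x i k) <= / d) n m) as [d [Hd Hb]].
  - intros i k d d' Hi Hk Hdd H x Hx. eapply Rle_trans; [apply H; auto|]. apply Rinv_le_contravar; lra.
  - intros i k Hi Hk. destruct (AC_bounded _ t0 T HT (abar_AC i k T Hi Hk HT)) as [B HB].
    exists (/ (Rabs B + 1)). split; [apply Rinv_0_lt_compat; pose proof (Rabs_pos B); lra|].
    intros x Hx. rewrite Rinv_inv. specialize (HB x Hx). pose proof (Rle_abs B). lra.
  - assert (Hd': 0 < / d) by (apply Rinv_0_lt_compat; auto).
    assert (HKb: 0 <= Kb n m w p) by (unfold Kb; repeat (apply rsum_nonneg; intros); apply Rabs_pos).
    apply (AC_comb V (fun i k t => abar t i k) n m t0 T (/ 2 * (2 * / d * Kb n m w p))).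
    + apply Rmult_le_pos; [lra|]. apply Rmult_le_pos; lra.
    + intros; apply abar_AC; auto.
    + intros x y Hx Hy. unfold V. rewrite <- Rmult_minus_distr_l. rewrite (Q_diff n m w p _ _ Hsym).
      rewrite Rabs_mult, Rabs_right by lra. rewrite (Rmult_assoc (/ 2)). apply Rmult_le_compat_l; [lra|].
      apply dotv_abs_bound. intros i k Hi Hk. apply Mvec_abs_bound; auto; [lra|].
      intros j l Hj Hl. eapply Rle_trans; [apply Rabs_triang|].
      pose proof (Hb j l Hj Hl x Hx). pose proof (Hb j l Hj Hl y Hy). lra. Qed.


Lemma SGN_mul z u : in_SGN z u -> u * z = Rabs z.
Proof. intros (H1 & H2 & H3). destruct (Rtotal_order z 0) as [Hz|[Hz|Hz]].
  - rewrite (H2 Hz), Rabs_left; lra.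
  - subst; rewrite Rabs_R0; ring.
  - rewrite (H1 Hz), Rabs_right; lra. Qed.

Lemma V_deriv s : t0 < s -> ~ Nul s -> exists Vd, derivable_pt_lim V s Vd /\
  Vd <= - (beta - S) * sqrt (sqv n m (Mvec n m w p (abar s))).
Proof. intros Hs HN.
  assert (HF': forall i k, exists q : R * R, (i < n)%nat -> (k < m)%nat ->
     derivable_pt_lim (a i k) s (fst q) /\ in_SGN (sliding_var n w p a a0 i k s) (snd q) /\ fst q = - beta * snd q).
  { intros i k. destruct (Compare_dec.lt_dec i n) as [Hi|Hi]; [destruct (Compare_dec.lt_dec k m) as [Hk|Hk]|].
    - destruct (HF s Hs HN i k Hi Hk) as [dd [u Hdu]]. exists (dd, u). intros; exact Hdu.
    - exists (0, 0). intros; lia.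
    - exists (0, 0). intros; lia. }
  set (D := fun i k => fst (proj1_sig (constructive_indefinite_description _ (HF' i k)))).
  set (U := fun i k => snd (proj1_sig (constructive_indefinite_description _ (HF' i k)))).
  assert (HD: forall i k, (i < n)%nat -> (k < m)%nat ->
     derivable_pt_lim (a i k) s (D i k) /\ in_SGN (sliding_var n w p a a0 i k s) (U i k) /\ D i k = - beta * U i k).
  { intros i k Hi Hk. unfold D, U. destruct (constructive_indefinite_description _ (HF' i k)) as [q Hq]. simpl. auto. }
  set (Ad := fun i k => D i k - da0 k s).
  set (W := Mvec n m w p (abar s)).
  assert (Hder: derivable_pt_lim V s (dotv n m Ad W)).
  { unfold V. eapply dlim_ext; [intros; reflexivity| |apply dlim_const_mult; apply (dlim_Mquad n m w p (fun j l x => abar x j l) Ad)].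
    - rewrite (Mquad_sym n m w p Hsym (fun j l => abar s j l) Ad). change (Mvec n m w p (fun j l => abar s j l)) with W. field.
    - intros j l Hj Hl. unfold abar, Ad. apply dlim_minus; [apply HD; auto|].
      apply (within_to_lim t0); auto. apply (Ha0 l Hl); lra. }
  exists (dotv n m Ad W). split; auto.
  assert (HW: forall i k, (i<n)%nat -> (k<m)%nat -> W i k = sliding_var n w p a a0 i k s).
  { intros; unfold W, abar; apply Mvec_sliding; auto; apply Hdiag. }
  set (r := fun i => sqrt (rsum m (fun k => W i k * W i k))).
  assert (Hrow: forall i, (i<n)%nat -> rsum m (fun k => Ad i k * W i k) <= - (beta - S) * r i).
  { intros i Hi. unfold Ad.
    transitivity (- beta * rsum m (fun k => Rabs (W i k)) + rsum m (fun k => W i k * (- da0 k s))).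
    - rewrite <- rsum_scal, <- rsum_plus. right. apply rsum_ext; intros k Hk.
      destruct (HD i k Hi Hk) as [_ [HS HDe]]. rewrite <- HW in HS by auto. rewrite HDe.
      rewrite <- (SGN_mul _ _ HS). ring.
    - pose proof (CS1' m (fun k => W i k) (fun k => - da0 k s)) as Hcs. cbv beta in Hcs.
      assert (E: rsum m (fun k => - da0 k s * - da0 k s) = rsum m (fun k => da0 k s * da0 k s)) by (apply rsum_ext; intros; ring).
      rewrite E in Hcs. fold (norm2 m (fun k => da0 k s)) in Hcs.
      pose proof (da_norm s ltac:(lra)) as Hn. pose proof (l1_l2 m (W i)) as Hl. fold (r i) in Hl, Hcs.
      assert (0 <= r i) by apply sqrt_pos. assert (0 <= norm2 m (fun k => da0 k s)) by apply sqrt_pos.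
      assert (r i * norm2 m (fun k => da0 k s) <= r i * S) by nra. nra. }
  unfold dotv. apply Rle_trans with (rsum n (fun i => - (beta - S) * r i)).
  - apply rsum_le; auto.
  - rewrite rsum_scal. pose proof (l1_l2 n r) as Hl.
    rewrite (rsum_ext n (fun k => Rabs (r k)) r) in Hl by (intros; apply Rabs_right; apply Rle_ge, sqrt_pos).
    rewrite (rsum_ext n (fun k => r k * r k) (fun i => rsum m (fun k => W i k * W i k))) in Hl
      by (intros; unfold r; apply sqrt_sqrt; apply rsum_nonneg; intros; exact (Rle_0_sqr _)).
    unfold sqv, dotv. fold W. assert (0 < beta - S) by lra. nra. Qed.


Lemma V_nonneg t : 0 <= V t.
Proof. unfold V. pose proof (Mquad_nonneg n m w p (abar t) Hgraph). lra. Qed.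

Lemma W_lower t : lmin * sqrt (sqv n m (abar t)) <= sqrt (sqv n m (Mvec n m w p (abar t))).
Proof. set (x := abar t). set (y := Mvec n m w p x).
  pose proof (Rayleigh_min n m w p lmin Hsym Hlmin x) as H1.
  pose proof (CS2' n m x y) as H2. change (Mquad n m w p x) with (dotv n m x y) in H1.
  pose proof (sqv_nonneg n m x). pose proof lmin_gt0.
  assert (Hq: sqrt (sqv n m x) * sqrt (sqv n m x) = sqv n m x) by (apply sqrt_sqrt; auto).
  destruct (Req_dec (sqrt (sqv n m x)) 0) as [E|E].
  - rewrite E. pose proof (sqrt_pos (sqv n m y)). lra.
  - assert (0 < sqrt (sqv n m x)) by (pose proof (sqrt_pos (sqv n m x)); lra).
    apply (Rmult_le_reg_l (sqrt (sqv n m x))); auto. nra. Qed.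

Lemma sqv_ge t : 2 * V t <= lmax * sqv n m (abar t).
Proof. unfold V. pose proof (Rayleigh_max n m w p lmax Hsym Hlmax (abar t)). lra. Qed.

Lemma AC_restrict g x y T : t0 <= x -> y <= T -> abs_continuous_on t0 T g -> abs_continuous_on x y g.
Proof. intros Hx Hy H eps He. destruct (H eps He) as [d [Hd Hd2]]. exists d; split; auto.
  intros N c dd Hcd Hord Hs. apply Hd2; auto. intros j Hj; specialize (Hcd j Hj); lra. Qed.

Lemma good_from_deriv (g : R -> R) x l : derivable_pt_lim g x l -> l < 0 ->
  exists eta, 0 < eta /\ forall h, 0 < h < eta -> g (x + h) <= g x /\ (t0 <= x - h -> g x <= g (x - h)).
Proof. intros H Hl. destruct (deriv_neg_local g x l H Hl) as [eta [He Hh]]. exists eta; split; auto.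
  intros h Hh'. destruct (Hh h Hh'). split; intros; lra. Qed.

Lemma good_from_deriv' (g : R -> R) x y l : derivable_pt_lim g x l -> l < 0 ->
  exists eta, 0 < eta /\ forall h, 0 < h < eta -> g (x + h) <= g x /\ (y <= x - h -> g x <= g (x - h)).
Proof. intros H Hl. destruct (deriv_neg_local g x l H Hl) as [eta [He Hh]]. exists eta; split; auto.
  intros h Hh'. destruct (Hh h Hh'). split; intros; lra. Qed.

Lemma V_mono x y : t0 <= x <= y -> V y <= V x.
Proof. intros Hxy.
  assert (H: forall eps, 0 < eps -> V y - eps * y <= V x - eps * x).
  { intros eps He.
    apply (ML (fun s => V s - eps * s) x y (fun s => Nul s \/ s = t0)); [lra| | |].
    - apply AC_sub. + apply (AC_restrict V x y y); [lra|lra|apply V_AC; lra].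
      + apply (AC_lip _ _ _ eps). intros u v _ _. rewrite <- Rmult_minus_distr_l, Rabs_mult, (Rabs_right eps) by lra. lra.
    - apply null_add_point; auto.
    - intros s Hs HE. assert (Hs0: t0 < s) by (destruct (Req_dec s t0); [exfalso; apply HE; auto|lra]).
      destruct (V_deriv s Hs0 (fun h => HE (or_introl h))) as [Vd [Hd Hb]].
      apply (good_from_deriv' (fun z => V z - eps * z) s x (Vd - eps * 1)).
      + apply dlim_minus; auto. apply (dlim_ext (fun z => eps * id z) _ _ (eps * 1)); [intros; reflexivity|reflexivity|].
        apply dlim_const_mult, derivable_pt_lim_id.
      + pose proof (sqrt_pos (sqv n m (Mvec n m w p (abar s)))). assert (0 < beta - S) by lra. nra. }
  apply Rnot_lt_le. intros Hlt. destruct (Req_dec x y) as [<-|Hne]; [lra|].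
  specialize (H ((V y - V x) / (2 * (y - x))) ltac:(apply Rdiv_lt_0_compat; lra)).
  assert (E: (V y - V x) / (2 * (y - x)) * y - (V y - V x) / (2 * (y - x)) * x = (V y - V x) / 2) by (field; lra).
  lra. Qed.


Definition cdec := (beta - S) * lmin / sqrt (2 * lmax).

Lemma sqrtV_decay t : t0 <= t -> 0 < V t -> sqrt (V t) <= sqrt (V t0) - cdec * (t - t0).
Proof. intros Ht HVt.
  pose proof lmin_gt0 as Hl. pose proof lmax_ge as Hlm. pose proof S_nonneg as HS0.
  assert (HB: 0 < sqrt (2 * lmax)) by (apply sqrt_lt_R0; lra).
  assert (Hk: 0 < (beta - S) * lmin) by (apply Rmult_lt_0_compat; lra).
  assert (Hge: forall s, t0 <= s <= t -> V t <= V s) by (intros; apply V_mono; lra).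
  assert (H: forall eps, 0 < eps -> sqrt (V t) - - (cdec - eps) * t <= sqrt (V t0) - - (cdec - eps) * t0).
  { intros eps He.
    apply (ML (fun z => sqrt (V z) - - (cdec - eps) * z) t0 t (fun s => Nul s \/ s = t0)); [lra| | |].
    - apply AC_sub.
      + apply (AC_comb (fun z => sqrt (V z)) (fun _ _ => V) 1 1 t0 t (/ (2 * sqrt (V t)))).
        * left; apply Rinv_0_lt_compat. pose proof (sqrt_lt_R0 _ HVt); lra.
        * intros; apply V_AC; lra.
        * intros x y Hx Hy. simpl rsum. rewrite !Rplus_0_l. apply sqrt_lip; auto; apply Hge; lra.
      + apply (AC_lip _ _ _ (Rabs (- (cdec - eps)))). intros u v _ _.
        rewrite <- Rmult_minus_distr_l, Rabs_mult. lra.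
    - apply null_add_point; auto.
    - intros s Hs HE. assert (Hs0: t0 < s) by (destruct (Req_dec s t0); [exfalso; apply HE; auto|lra]).
      destruct (V_deriv s Hs0 (fun h => HE (or_introl h))) as [Vd [Hd Hb]].
      assert (HVs: 0 < V s) by (pose proof (Hge s ltac:(lra)); lra).
      set (A := sqrt (V s)). assert (HA: 0 < A) by (apply sqrt_lt_R0; auto).
      set (q := sqrt (sqv n m (abar s))).
      assert (Hq0: 0 <= q) by apply sqrt_pos.
      assert (Hvd: Vd <= - ((beta - S) * lmin) * q).
      { pose proof (W_lower s). fold q in H. assert (0 < beta - S) by lra. nra. }
      assert (HqB: 2 * A <= q * sqrt (2 * lmax)).
      { apply Rsqr_incr_0_var; [|apply Rmult_le_pos; lra]. unfold Rsqr.
        replace (2 * A * (2 * A)) with (4 * (A * A)) by ring.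
        replace (q * sqrt (2 * lmax) * (q * sqrt (2 * lmax))) with ((q * q) * (sqrt (2 * lmax) * sqrt (2 * lmax))) by ring.
        unfold A, q. rewrite !sqrt_sqrt; try lra; [|apply sqv_nonneg].
        pose proof (sqv_ge s). lra. }
      assert (Hc: cdec <= (beta - S) * lmin * q / (2 * A)).
      { unfold cdec. apply (Rmult_le_reg_r (2 * A * sqrt (2 * lmax))); [nra|].
        replace ((beta - S) * lmin / sqrt (2 * lmax) * (2 * A * sqrt (2 * lmax))) with ((beta - S) * lmin * (2 * A)) by (field; lra).
        replace ((beta - S) * lmin * q / (2 * A) * (2 * A * sqrt (2 * lmax))) with ((beta - S) * lmin * (q * sqrt (2 * lmax))) by (field; lra).
        apply Rmult_le_compat_l; lra. }
      apply (good_from_deriv' (fun z => sqrt (V z) - - (cdec - eps) * z) s t0 (/ (2 * A) * Vd - - (cdec - eps) * 1)).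
      + apply dlim_minus.
        * apply (derivable_pt_lim_comp V sqrt s Vd (/ (2 * A))); auto. apply derivable_pt_lim_sqrt; auto.
        * apply (dlim_ext (fun z => - (cdec - eps) * id z) _ _ (- (cdec - eps) * 1)); [intros; reflexivity|reflexivity|].
          apply dlim_const_mult, derivable_pt_lim_id.
      + assert (/ (2 * A) * Vd <= - ((beta - S) * lmin * q / (2 * A))).
        { unfold Rdiv. replace (- ((beta - S) * lmin * q * / (2 * A))) with (/ (2 * A) * (- ((beta - S) * lmin) * q)) by ring.
          apply Rmult_le_compat_l; [left; apply Rinv_0_lt_compat; lra| auto]. }
        lra. }
  destruct (Req_dec t t0) as [->|Hne]; [lra|].
  apply Rnot_lt_le. intros Hlt.
  set (G := sqrt (V t) - (sqrt (V t0) - cdec * (t - t0))).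
  specialize (H (G / (2 * (t - t0))) ltac:(apply Rdiv_lt_0_compat; unfold G; lra)).
  assert (E: - (cdec - G / (2 * (t - t0))) * t - - (cdec - G / (2 * (t - t0))) * t0 = - cdec * (t - t0) + G / 2) by (field; lra).
  unfold G in *. lra. Qed.

Lemma Rdiv_le_0_compat' x y : 0 <= x -> 0 < y -> 0 <= x / y.
Proof. intros. unfold Rdiv. apply Rmult_le_pos; auto. left; apply Rinv_0_lt_compat; auto. Qed.

Lemma V_zero t : t0 + sqrt (2 * lmax * V t0) / (lmin * (beta - S)) <= t -> V t = 0.
Proof. intros Ht. pose proof lmin_gt0 as Hl. pose proof lmax_ge as Hlm. pose proof S_nonneg as HS0.
  pose proof (V_nonneg t0) as HV0.
  assert (Hden: 0 < lmin * (beta - S)) by (apply Rmult_lt_0_compat; lra).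
  assert (Hs: 0 <= sqrt (2 * lmax * V t0) / (lmin * (beta - S))) by (apply Rdiv_le_0_compat'; [apply sqrt_pos|auto]).
  destruct (V_nonneg t) as [Hp|Hz]; [|auto]. exfalso.
  pose proof (sqrtV_decay t ltac:(lra) Hp) as Hd.
  assert (HB: 0 < sqrt (2 * lmax)) by (apply sqrt_lt_R0; lra).
  assert (E: sqrt (2 * lmax * V t0) = sqrt (2 * lmax) * sqrt (V t0)) by (apply sqrt_mult; lra).
  assert (cdec * (t - t0) >= sqrt (V t0)).
  { apply Rle_ge. apply Rle_trans with (cdec * (sqrt (2 * lmax * V t0) / (lmin * (beta - S)))).
    - rewrite E. unfold cdec. right. field. lra.
    - apply Rmult_le_compat_l; [unfold cdec; apply Rdiv_le_0_compat'; [apply Rmult_le_pos; lra|lra]|lra]. }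
  pose proof (sqrt_lt_R0 _ Hp). lra. Qed.

End Main.

Theorem mainTheorem3
  (n m : nat) (w : nat -> nat -> R) (p : nat -> R)
  (t0 beta : R) (a0 da0 : nat -> R -> R) (a : nat -> nat -> R -> R)
  (lmin lmax sup_da0 : R)
  (Hgraph : graph_ok n w p)
  (HA1 : assumption_A1 n w p)
  (Ha0 : C1_from t0 m a0 da0)
  (Hbeta : 0 < beta)
  (Hsup : is_lub (fun x => exists t, t0 <= t /\ x = norm2 m (fun k => da0 k t)) sup_da0)
  (HA2 : sup_da0 < beta)
  (Hlmin : is_lambda_min n m w p lmin)
  (Hlmax : is_lambda_max n m w p lmax)
  (Hsol : filippov_solution n m w p beta t0 a0 a) :
  let V0 := / 2 * Mquad n m w p (fun i k => a i k t0 - a0 k t0) in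
  let Tf := t0 + sqrt (2 * lmax * V0) / (lmin * (beta - sup_da0)) in
  forall t, Tf <= t ->
    forall i k, (i < n)%nat -> (k < m)%nat -> a i k t = a0 k t.
Proof.
  intros V0 Tf t Ht i k Hi Hk. destruct Hsol as [Hac [Nul [HNul HF]]].
  pose proof (V_zero n m w p t0 beta a0 da0 a lmin lmax sup_da0 Nul Hgraph HA1 Ha0 Hsup HA2 Hlmin Hlmax Hac HNul HF t Ht) as HV.
  unfold V in HV. assert (HQ: Mquad n m w p (abar a0 a t) = 0) by lra.
  pose proof (Mquad_zero n m w p (abar a0 a t) Hgraph HA1 HQ i k Hi Hk) as H0. unfold abar in H0. lra.
Qed.
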